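(* Let $p$ be an admissible linear order on $\mathcal A=L_e\sqcup L_o\sqcup G$, and let $p^t$ be the reverse order. Let $\phi_{p^t}$ be the generalised RSK shape map computed with the order $p^t$ and with the roles of $L_e$ and $L_o$ exchanged (i.e. with $L_e^t=L_o$, $L_o^t=L_e$, and $G$ unchanged). Then for every word $w\in\mathcal A^n$ whose letters from $G$ are pairwise distinct (hence for $\mu_n$-almost every $w$), $\phi_p(w)=\phi_{p^t}(w)^t$, where $\lambda^t$ denotes the transpose of a Young diagram $\lambda$.
   Context: Alphabet: $\mathcal A=L_e\sqcup L_o\sqcup G$ where $L_e=\{x_1,x_2,\dots\}$, $L_o=\{y_1,y_2,\dots\}$ are discrete and $G$ is identified with an interval of $\mathbb R$; $\mu_n=\mu_1^{\otimes n}$ where $\mu_1(\{x_i\})=\alpha_i$, $\mu_1(\{y_j\})=\beta_j$, and $\mu_1$ restricted to $G$ is $\gamma$ times normalized Lebesgue measure, for Thoma parameters $\mathcal P$. An admissible order is a linear order $p$ on $\mathcal A$ for which $G$ is an interval and whose restriction to $G$ is the usual order of reals or its reverse. Generalised RSK (row insertion) w.r.t. an order and a splitting into $L_e$, $L_o$, $G$: to insert a letter $x$ into a tableau $T$: in the first row, if $x\in L_e$ find the leftmost entry strictly greater than $x$; if $x\in L_o\cup G$ find the leftmost entry greater than or equal to $x$; if there is none, append $x$ at the end of the row and stop; otherwise $x$ replaces that entry and the replaced entry is inserted into the second row by the same rule, and so on (an entry bumped out of the last row forms a new row). For $w=z_1\cdots z_n$, $R(w)$ is obtained by inserting $z_1,\dots,z_n$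 successively into the empty tableau, and $\phi_p(w)$ is the shape of $R(w)$. *)

(* Defs.v *)
From Stdlib Require Import Reals List Arith.
Import ListNotations.
Open Scope R_scope.

(* The alphabet A = L_e ⊔ L_o ⊔ G.  L_e = {x_1,x_2,...} is [Le i],
   L_o = {y_1,y_2,...} is [Lo j], and G is an interval I of R, a letter
   of G being [Gr x] with [I x]. *)
Inductive Letter : Type :=
  | Le : nat -> Letter
  | Lo : nat -> Letter
  | Gr : R -> Letter.

Definition inA (I : R -> Prop) (a : Letter) : Prop :=
  match a with Gr x => I x | _ => True end.

Definition isLe (a : Letter) : bool := match a with Le _ => true | _ => false end.
Definition isLo (a : Letter) : bool := match a with Lo _ => true | _ => false end.
Definition isG  (a : Letter) : bool := match a with Gr _ => true | _ => false end.

Definition is_interval (I : R -> Prop) : Prop :=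
  forall x y z, I x -> I z -> x <= y <= z -> I y.

Definition Rleb (x y : R) : bool := if Rle_dec x y then true else false.

Definition admissible (I : R -> Prop) (le : Letter -> Letter -> bool) : Prop :=
  (forall a, inA I a -> le a a = true) /\
  (forall a b, inA I a -> inA I b -> le a b = true -> le b a = true -> a = b) /\
  (forall a b c, inA I a -> inA I b -> inA I c ->
     le a b = true -> le b c = true -> le a c = true) /\
  (forall a b, inA I a -> inA I b -> le a b = true \/ le b a = true) /\
  (forall a b c, inA I a -> inA I b -> inA I c ->
     isG a = true -> isG c = true -> le a b = true -> le b c = true -> isG b = true) /\
  ((forall x y, I x -> I y -> le (Gr x) (Gr y) = Rleb x y) \/
   (forall x y, I x -> I y -> le (Gr x) (Gr y) = Rleb y x)).

Definition rev_order (le : Letter -> Letter -> bool) : Letter -> Letter -> bool :=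
  fun a b => le b a.

(* Generalised RSK row insertion w.r.t. the order [le] and the splitting in
   which the letters satisfying [strictE] form the "L_e" part (strict bumping:
   leftmost entry strictly greater); all other letters (L_o and G) bump the
   leftmost entry greater than or equal to them. *)
Definition ltb (le : Letter -> Letter -> bool) (a b : Letter) : bool :=
  le a b && negb (le b a).

Fixpoint row_insert (le : Letter -> Letter -> bool) (strictE : Letter -> bool)
    (x : Letter) (r : list Letter) : option Letter * list Letter :=
  match r with
  | [] => (None, [x])
  | e :: r' =>
      if (if strictE x then ltb le x e else le x e)
      then (Some e, x :: r')
      else let (b, r'') := row_insert le strictE x r' in (b, e :: r'')
  end.

Fixpoint tab_insert (le : Letter -> Letter -> bool) (strictE : Letter -> bool)
    (x : Letter) (T : list (list Letter)) : list (list Letter) :=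
  match T with
  | [] => [[x]]
  | r :: T' =>
      match row_insert le strictE x r with
      | (None, r') => r' :: T'
      | (Some y, r') => r' :: tab_insert le strictE y T'
      end
  end.

Definition RSK (le : Letter -> Letter -> bool) (strictE : Letter -> bool)
    (w : list Letter) : list (list Letter) :=
  fold_left (fun T x => tab_insert le strictE x T) w [].

Definition shape (T : list (list Letter)) : list nat := map (@length Letter) T.

Definition phi (le : Letter -> Letter -> bool) (strictE : Letter -> bool)
    (w : list Letter) : list nat := shape (RSK le strictE w).

Definition transpose (l : list nat) : list nat :=
  map (fun j => length (filter (fun k => Nat.ltb j k) l)) (seq 0 (list_max l)).

Definition G_letters (w : list Letter) : list R :=
  flat_map (fun a => match a with Gr x => [x] | _ => [] end) w.

(* Main.v *)
Require Import Defs.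
From Stdlib Require Import Reals List Arith Lia Relations Permutation Classical Bool.
Import ListNotations.
Open Scope nat_scope.

Record axR (P : Letter -> Prop) (R : Letter -> Letter -> bool) : Prop := {
  axT : forall a b c, P a -> P b -> P c -> R a b = true -> R b c = true -> R a c = true;
  axN : forall a b c, P a -> P b -> P c -> R a b = true -> R a c = true \/ R c b = true }.

Definition negR (R : Letter -> Letter -> bool) : Letter -> Letter -> bool :=
  fun a b => negb (R a b).

Lemma axR_neg P R : axR P R -> axR P (negR R).
Proof.
  intros [HT HN]; split; unfold negR; intros a b c Pa Pb Pc.
  - intros H1 H2. apply negb_true_iff in H1, H2. apply negb_true_iff.
    destruct (R a c) eqn:E; auto.
    destruct (HN a c b Pa Pc Pb E) as [X|X]; congruence.
  - intros H1. apply negb_true_iff in H1.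
    destruct (R a c) eqn:E1; destruct (R c b) eqn:E2; simpl; auto.
    rewrite (HT a c b Pa Pc Pb E1 E2) in H1; discriminate.
Qed.

Lemma negR_negR R a b : negR (negR R) a b = R a b.
Proof. unfold negR; apply negb_involutive. Qed.

Lemma nT P R (H : axR P R) a b c : P a -> P b -> P c ->
  R a b = false -> R b c = false -> R a c = false.
Proof.
  intros Pa Pb Pc H1 H2. destruct (R a c) eqn:E; auto.
  destruct (axN _ _ H a c b Pa Pc Pb E); congruence.
Qed.

Lemma mixN P R (H : axR P R) a b c : P a -> P b -> P c ->
  R a b = true -> R c b = false -> R a c = true.
Proof.
  intros Pa Pb Pc H1 H2. destruct (axN _ _ H a b c Pa Pb Pc H1); congruence.
Qed.

Lemma mixT P R (H : axR P R) a b c : P a -> P b -> P c ->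
  R a b = true -> R a c = false -> R b c = false.
Proof.
  intros Pa Pb Pc H1 H2. destruct (R b c) eqn:E; auto.
  rewrite (axT _ _ H a b c Pa Pb Pc H1 E) in H2; discriminate.
Qed.

Lemma mixT2 P R (H : axR P R) a b c : P a -> P b -> P c ->
  R b c = true -> R a c = false -> R a b = false.
Proof.
  intros Pa Pb Pc H1 H2. destruct (R a b) eqn:E; auto.
  rewrite (axT _ _ H a b c Pa Pb Pc E H1) in H2; discriminate.
Qed.

Definition chainR (R : Letter -> Letter -> bool) (l : list Letter) :=
  ForallOrdPairs (fun a b => R a b = true) l.

Lemma chainR_app R l1 l2 : chainR R (l1 ++ l2) <->
  chainR R l1 /\ chainR R l2 /\ (forall x y, In x l1 -> In y l2 -> R x y = true).
Proof.
  unfold chainR; induction l1 as [|a l1 IH]; simpl.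
  - split.
    + intros H; repeat split; auto; try constructor; intros x y [] .
    + tauto.
  - split.
    + intros H; inversion H; subst. apply IH in H3 as [H4 [H5 H6]].
      apply Forall_app in H2 as [H7 H8].
      repeat split; auto. constructor; auto.
      intros x y [<-|Hx] Hy; auto. rewrite Forall_forall in H8; auto.
    + intros [H1 [H2 H3]]. inversion H1; subst. constructor.
      * apply Forall_app; split; auto. rewrite Forall_forall; intros; apply H3; simpl; auto.
      * apply IH; repeat split; auto.
Qed.

Lemma chainR_cons R a l : chainR R (a :: l) <-> (forall y, In y l -> R a y = true) /\ chainR R l.
Proof.
  unfold chainR; split.
  - intros H; inversion H; subst; split; auto. rewrite Forall_forall in H2; auto.
  - intros [H1 H2]; constructor; auto. rewrite Forall_forall; auto.
Qed.

Lemma chainR_nil R : chainR R [].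
Proof. constructor. Qed.

Lemma chainR_mid R X Y Z : chainR R (X ++ Y ++ Z) <->
  chainR R X /\ chainR R Y /\ chainR R Z /\
  (forall x y, In x X -> In y Y -> R x y = true) /\
  (forall x y, In x X -> In y Z -> R x y = true) /\
  (forall x y, In x Y -> In y Z -> R x y = true).
Proof.
  rewrite chainR_app, chainR_app. split.
  - intros [H1 [[H2 [H3 H4]] H5]]. repeat split; auto.
    + intros; apply H5; auto; apply in_or_app; auto.
    + intros; apply H5; auto; apply in_or_app; auto.
  - intros [H1 [H2 [H3 [H4 [H5 H6]]]]]. repeat split; auto.
    intros x y Hx Hy; apply in_app_or in Hy as [Hy|Hy]; auto.
Qed.

Lemma chainR_two R a b : chainR R [a;b] <-> R a b = true.
Proof.
  rewrite chainR_cons. split.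
  - intros [H _]; apply H; simpl; auto.
  - intros H; split. intros y [<-|[]]; auto. apply chainR_cons; split. intros y []. apply chainR_nil.
Qed.

Lemma chainR_one R a : chainR R [a].
Proof. apply chainR_cons; split. intros y []. apply chainR_nil. Qed.

Definition fl (l0 : nat) (z : list (Letter * nat)) : list Letter :=
  map fst (filter (fun p => Nat.eqb (snd p) l0) z).
Definition cnt (z : list (Letter * nat)) : nat :=
  length (filter (fun p => negb (Nat.eqb (snd p) 0)) z).
Definition goodz R k (z : list (Letter * nat)) :=
  Forall (fun p => snd p <= k) z /\ forall l, l <> 0 -> chainR R (fl l z).
Definition ach R (w : list Letter) k m :=
  exists z, map fst z = w /\ goodz R k z /\ m <= cnt z.

Lemma fl_app l z1 z2 : fl l (z1 ++ z2) = fl l z1 ++ fl l z2.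
Proof. unfold fl; rewrite filter_app, map_app; auto. Qed.
Lemma fl_cons l p z : fl l (p :: z) = if Nat.eqb (snd p) l then fst p :: fl l z else fl l z.
Proof. unfold fl; simpl; destruct (snd p =? l); auto. Qed.
Lemma cnt_app z1 z2 : cnt (z1 ++ z2) = cnt z1 + cnt z2.
Proof. unfold cnt; rewrite filter_app, length_app; auto. Qed.
Lemma cnt_cons p z : cnt (p :: z) = (if Nat.eqb (snd p) 0 then 0 else 1) + cnt z.
Proof. unfold cnt; simpl; destruct (snd p =? 0); auto. Qed.

Definition swl (l1 l2 : nat) (z : list (Letter * nat)) :=
  map (fun p => (fst p, if Nat.eqb (snd p) l1 then l2 else if Nat.eqb (snd p) l2 then l1 else snd p)) z.

Definition swf (l1 l2 x : nat) := if Nat.eqb x l1 then l2 else if Nat.eqb x l2 then l1 else x.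

Lemma swf_eqb l1 l2 x l0 : l1 <> l2 -> Nat.eqb (swf l1 l2 x) l0 = Nat.eqb x (swf l1 l2 l0).
Proof.
  intros Hne; unfold swf.
  destruct (Nat.eqb_spec x l1); destruct (Nat.eqb_spec x l2);
  destruct (Nat.eqb_spec l0 l1); destruct (Nat.eqb_spec l0 l2); subst;
  repeat first [ rewrite Nat.eqb_refl | match goal with |- context [?a =? ?b] => destruct (Nat.eqb_spec a b) end ]; auto; lia.
Qed.

Lemma fl_swl l1 l2 l0 z : l1 <> l2 ->
  fl l0 (swl l1 l2 z) = fl (swf l1 l2 l0) z.
Proof.
  intros Hne; induction z as [|p z IH]; simpl; auto.
  unfold swl in *; simpl. rewrite !fl_cons, IH; simpl.
  fold (swf l1 l2 (snd p)). rewrite swf_eqb; auto.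
Qed.

Lemma cnt_swl l1 l2 z : l1 <> 0 -> l2 <> 0 -> cnt (swl l1 l2 z) = cnt z.
Proof.
  intros H1 H2; induction z as [|p z IH]; simpl; auto.
  unfold swl in *; simpl; rewrite !cnt_cons, IH; simpl. f_equal.
  destruct (Nat.eqb_spec (snd p) l1); destruct (Nat.eqb_spec (snd p) l2);
  repeat match goal with |- context [?a =? ?b] => destruct (Nat.eqb_spec a b) end; lia.
Qed.

Lemma Forall_swl k l1 l2 z : l1 <= k -> l2 <= k -> Forall (fun p => snd p <= k) z ->
  Forall (fun p => snd p <= k) (swl l1 l2 z).
Proof.
  intros H1 H2 H; unfold swl; rewrite Forall_map; eapply Forall_impl; [|exact H].
  intros p Hp; simpl; destruct (snd p =? l1); destruct (snd p =? l2); auto.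
Qed.

Lemma map_fst_swl l1 l2 z : map fst (swl l1 l2 z) = map fst z.
Proof. unfold swl; rewrite map_map; simpl; auto. Qed.

Lemma mixN2 P R (H : axR P R) a b c : P a -> P b -> P c ->
  R a b = true -> R a c = false -> R c b = true.
Proof.
  intros Pa Pb Pc H1 H2. destruct (axN _ _ H a b c Pa Pb Pc H1); congruence.
Qed.

Lemma chK1a P R (H : axR P R) X Y a b c :
  (forall x, In x X -> P x) -> (forall x, In x Y -> P x) -> P a -> P b -> P c ->
  R c b = true -> R c a = false ->
  chainR R (X ++ [a;b] ++ Y) -> chainR R (X ++ [c;b] ++ Y).
Proof.
  intros PX PY Pa Pb Pc Hcb Hca Hch.
  apply chainR_mid in Hch as [A1 [B1 [C1 [D1 [E1 F1]]]]].
  apply chainR_mid; repeat split; auto.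
  - apply chainR_two; auto.
  - intros x y Hx [<-|[<-|[]]].
    + apply (mixN _ _ H x a c); auto. apply D1; simpl; auto.
    + apply D1; simpl; auto.
  - intros x y [<-|[<-|[]]] Hy.
    + apply (axT _ _ H c b y); auto. apply F1; simpl; auto.
    + apply F1; simpl; auto.
Qed.

Lemma chK1b P R (H : axR P R) X1 Y1 X2 Y2 a b c :
  (forall x, In x X1 -> P x) -> (forall x, In x Y1 -> P x) ->
  (forall x, In x X2 -> P x) -> (forall x, In x Y2 -> P x) -> P a -> P b -> P c ->
  R c b = true -> R c a = false ->
  chainR R (X1 ++ [c] ++ Y1) -> chainR R (X2 ++ [a;b] ++ Y2) ->
  chainR R (X1 ++ [c;b] ++ Y2) /\ chainR R (X2 ++ [a] ++ Y1).
Proof.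
  intros PX1 PY1 PX2 PY2 Pa Pb Pc Hcb Hca H1 H2.
  apply chainR_mid in H1 as [A1 [B1 [C1 [D1 [E1 F1]]]]].
  apply chainR_mid in H2 as [A2 [B2 [C2 [D2 [E2 F2]]]]].
  assert (Hcy : forall y, In y Y2 -> R c y = true).
  { intros y Hy; apply (axT _ _ H c b y); auto. apply F2; simpl; auto. }
  assert (Hay : forall y, In y Y1 -> R a y = true).
  { intros y Hy; apply (mixN2 _ _ H c y a); auto. apply F1; simpl; auto. }
  split; apply chainR_mid; repeat split; auto using chainR_one.
  - apply chainR_two; auto.
  - intros x y Hx [<-|[<-|[]]].
    + apply D1; simpl; auto.
    + apply (axT _ _ H x c b); auto. apply D1; simpl; auto.
  - intros x y Hx Hy. apply (axT _ _ H x c y); auto. apply D1; simpl; auto.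
  - intros x y [<-|[<-|[]]] Hy; auto. apply F2; simpl; auto.
  - intros x y Hx [<-|[]]. apply D2; simpl; auto.
  - intros x y Hx Hy. apply (axT _ _ H x a y); auto. apply D2; simpl; auto.
  - intros x y [<-|[]] Hy; auto.
Qed.

Lemma chK2a P R (H : axR P R) X Y a b c :
  (forall x, In x X -> P x) -> (forall x, In x Y -> P x) -> P a -> P b -> P c ->
  R a b = true -> R c b = false ->
  chainR R (X ++ [a;c] ++ Y) -> chainR R (X ++ [a;b] ++ Y).
Proof.
  intros PX PY Pa Pb Pc Hab Hcb Hch.
  apply chainR_mid in Hch as [A1 [B1 [C1 [D1 [E1 F1]]]]].
  apply chainR_mid; repeat split; auto.
  - apply chainR_two; auto.
  - intros x y Hx [<-|[<-|[]]].
    + apply D1; simpl; auto.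
    + apply (axT _ _ H x a b); auto. apply D1; simpl; auto.
  - intros x y [<-|[<-|[]]] Hy.
    + apply F1; simpl; auto.
    + apply (mixN2 _ _ H c y b); auto. apply F1; simpl; auto.
Qed.

Lemma chK2b P R (H : axR P R) X1 Y1 X2 Y2 a b c :
  (forall x, In x X1 -> P x) -> (forall x, In x Y1 -> P x) ->
  (forall x, In x X2 -> P x) -> (forall x, In x Y2 -> P x) -> P a -> P b -> P c ->
  R a b = true -> R c b = false ->
  chainR R (X1 ++ [a;c] ++ Y1) -> chainR R (X2 ++ [b] ++ Y2) ->
  chainR R (X1 ++ [a;b] ++ Y2) /\ chainR R (X2 ++ [c] ++ Y1).
Proof.
  intros PX1 PY1 PX2 PY2 Pa Pb Pc Hab Hcb H1 H2.
  apply chainR_mid in H1 as [A1 [B1 [C1 [D1 [E1 F1]]]]].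
  apply chainR_mid in H2 as [A2 [B2 [C2 [D2 [E2 F2]]]]].
  assert (Hay : forall y, In y Y2 -> R a y = true).
  { intros y Hy; apply (axT _ _ H a b y); auto. apply F2; simpl; auto. }
  assert (Hxc : forall x, In x X2 -> R x c = true).
  { intros x Hx; apply (mixN _ _ H x b c); auto. apply D2; simpl; auto. }
  split; apply chainR_mid; repeat split; auto using chainR_one.
  - apply chainR_two; auto.
  - intros x y Hx [<-|[<-|[]]].
    + apply D1; simpl; auto.
    + apply (axT _ _ H x a b); auto. apply D1; simpl; auto.
  - intros x y Hx Hy. apply (axT _ _ H x a y); auto. apply D1; simpl; auto.
  - intros x y [<-|[<-|[]]] Hy; auto. apply F2; simpl; auto.
  - intros x y Hx [<-|[]]. auto.
  - intros x y Hx Hy. apply (axT _ _ H x c y); auto. apply F1; simpl; auto.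
  - intros x y [<-|[]] Hy. apply F1; simpl; auto.
Qed.

Lemma in_fl l z x : In x (fl l z) -> In x (map fst z).
Proof.
  unfold fl; intros Hx; apply in_map_iff in Hx as [p [<- Hp]].
  apply filter_In in Hp as [Hp _]; apply in_map; auto.
Qed.

Lemma fl_swap l p q : (Nat.eqb (snd p) l && Nat.eqb (snd q) l) = false ->
  fl l [p;q] = fl l [q;p].
Proof.
  intros H; rewrite !fl_cons; unfold fl; simpl.
  destruct (snd p =? l); destruct (snd q =? l); simpl in *; auto; discriminate.
Qed.

Lemma swap_good R k zu p q zv : goodz R k (zu ++ p::q::zv) -> (snd p = snd q -> snd p = 0) ->
  goodz R k (zu ++ q::p::zv) /\ cnt (zu ++ q::p::zv) = cnt (zu ++ p::q::zv).
Proof.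
  intros [HF Hc] Hne. split; [split|].
  - apply Forall_app in HF as [H1 H2]; apply Forall_app; split; auto.
    inversion H2; subst. inversion H4; subst. repeat constructor; auto.
  - intros l Hl. specialize (Hc l Hl).
    replace (fl l (zu ++ q :: p :: zv)) with (fl l (zu ++ p :: q :: zv)); auto.
    change (p :: q :: zv) with ([p;q] ++ zv). change (q :: p :: zv) with ([q;p] ++ zv).
    rewrite !fl_app. f_equal. f_equal. apply fl_swap.
    destruct (Nat.eqb_spec (snd p) l); destruct (Nat.eqb_spec (snd q) l); simpl; auto. lia.
  - rewrite !cnt_app, !cnt_cons; lia.
Qed.

Ltac eqbs := repeat match goal with |- context [Nat.eqb ?a ?b] => destruct (Nat.eqb_spec a b) end.

Lemma hardK1 P R (H : axR P R) k zu zv c a b lc l :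
  (forall x, In x (map fst zu) -> P x) -> (forall x, In x (map fst zv) -> P x) -> P a -> P b -> P c ->
  R c b = true -> R c a = false -> l <> 0 ->
  goodz R k (zu ++ (c,lc)::(a,l)::(b,l)::zv) ->
  exists z1, map fst z1 = map fst zu ++ c::b::a::map fst zv /\ goodz R k z1 /\
     cnt z1 = cnt (zu ++ (c,lc)::(a,l)::(b,l)::zv).
Proof.
  intros PU PV Pa Pb Pc Hcb Hca Hl [HF Hch].
  assert (PU' : forall l0 x, In x (fl l0 zu) -> P x) by (intros l0 x Hx; apply PU; eapply in_fl; eauto).
  assert (PV' : forall l0 x, In x (fl l0 zv) -> P x) by (intros l0 x Hx; apply PV; eapply in_fl; eauto).
  apply Forall_app in HF as [HFu HFr]. inversion HFr as [|? ? Hlc HFr2]; subst.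
  inversion HFr2 as [|? ? Hla HFr3]; subst. inversion HFr3 as [|? ? _ HFv]; subst. simpl in *.
  destruct (Nat.eq_dec lc 0) as [E|E].
  - subst lc. exists (zu ++ (c,l)::(b,l)::(a,0)::zv). split; [|split; [split|]].
    + rewrite map_app; auto.
    + apply Forall_app; split; auto; repeat constructor; simpl; auto; lia.
    + intros l0 Hl0. specialize (Hch l0 Hl0). rewrite !fl_app, !fl_cons in *; cbn [fst snd] in *.
      destruct (Nat.eqb_spec 0 l0); [lia|]. destruct (Nat.eqb_spec l l0).
      * subst l0. eapply (chK1a _ _ H _ _ a b c); eauto.
      * auto.
    + rewrite !cnt_app, !cnt_cons; simpl. eqbs; lia.
  - assert (Elc : lc <> l).
    { intros ->. specialize (Hch l Hl). rewrite fl_app, !fl_cons in Hch; cbn [fst snd] in Hch.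
      rewrite Nat.eqb_refl in Hch. apply chainR_app in Hch as [_ [Hch _]].
      apply chainR_cons in Hch as [Hch _]. rewrite (Hch a) in Hca; simpl; auto; discriminate. }
    exists (zu ++ (c,lc)::(b,lc)::(a,l)::swl l lc zv). split; [|split; [split|]].
    + rewrite map_app; simpl; rewrite map_fst_swl; auto.
    + apply Forall_app; split; auto. constructor; simpl; auto. constructor; simpl; auto.
      constructor; simpl; auto. apply Forall_swl; auto.
    + intros l0 Hl0. rewrite !fl_app, !fl_cons, fl_swl by auto; cbn [fst snd].
      pose proof (Hch lc E) as H1. pose proof (Hch l Hl) as H2.
      rewrite !fl_app, !fl_cons in H1, H2; cbn [fst snd] in H1, H2.
      rewrite Nat.eqb_refl in H1, H2. rewrite (proj2 (Nat.eqb_neq l lc)) in H1 by auto.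
      rewrite (proj2 (Nat.eqb_neq lc l)) in H2 by auto.
      destruct (chK1b _ _ H (fl lc zu) (fl lc zv) (fl l zu) (fl l zv) a b c) as [G1 G2]; eauto.
      unfold swf. destruct (Nat.eqb_spec lc l0).
      * subst l0. rewrite (proj2 (Nat.eqb_neq lc l)) by auto. rewrite Nat.eqb_refl.
        rewrite (proj2 (Nat.eqb_neq l lc)) by auto. exact G1.
      * destruct (Nat.eqb_spec l l0).
        -- subst l0. rewrite Nat.eqb_refl. exact G2.
        -- rewrite (proj2 (Nat.eqb_neq l0 l)) by auto. rewrite (proj2 (Nat.eqb_neq l0 lc)) by auto.
           specialize (Hch l0 Hl0). rewrite !fl_app, !fl_cons in Hch; cbn [fst snd] in Hch.
           rewrite (proj2 (Nat.eqb_neq lc l0)), (proj2 (Nat.eqb_neq l l0)) in Hch by auto. exact Hch.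
    + rewrite !cnt_app, !cnt_cons, cnt_swl by auto; simpl. eqbs; lia.
Qed.

Lemma hardK2 P R (H : axR P R) k zu zv c a b lb l :
  (forall x, In x (map fst zu) -> P x) -> (forall x, In x (map fst zv) -> P x) -> P a -> P b -> P c ->
  R a b = true -> R c b = false -> l <> 0 ->
  goodz R k (zu ++ (a,l)::(c,l)::(b,lb)::zv) ->
  exists z1, map fst z1 = map fst zu ++ c::a::b::map fst zv /\ goodz R k z1 /\
     cnt z1 = cnt (zu ++ (a,l)::(c,l)::(b,lb)::zv).
Proof.
  intros PU PV Pa Pb Pc Hab Hcb Hl [HF Hch].
  assert (PU' : forall l0 x, In x (fl l0 zu) -> P x) by (intros l0 x Hx; apply PU; eapply in_fl; eauto).
  assert (PV' : forall l0 x, In x (fl l0 zv) -> P x) by (intros l0 x Hx; apply PV; eapply in_fl; eauto).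
  apply Forall_app in HF as [HFu HFr]. inversion HFr as [|? ? Hla HFr2]; subst.
  inversion HFr2 as [|? ? _ HFr3]; subst. inversion HFr3 as [|? ? Hlb HFv]; subst. simpl in *.
  destruct (Nat.eq_dec lb 0) as [E|E].
  - subst lb. exists (zu ++ (c,0)::(a,l)::(b,l)::zv). split; [|split; [split|]].
    + rewrite map_app; auto.
    + apply Forall_app; split; auto; repeat constructor; simpl; auto; lia.
    + intros l0 Hl0. specialize (Hch l0 Hl0). rewrite !fl_app, !fl_cons in *; cbn [fst snd] in *.
      destruct (Nat.eqb_spec 0 l0); [lia|]. destruct (Nat.eqb_spec l l0).
      * subst l0. eapply (chK2a _ _ H _ _ a b c); eauto.
      * auto.
    + rewrite !cnt_app, !cnt_cons; simpl. eqbs; lia.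
  - assert (Elb : lb <> l).
    { intros ->. specialize (Hch l Hl). rewrite fl_app, !fl_cons in Hch; cbn [fst snd] in Hch.
      rewrite Nat.eqb_refl in Hch. apply chainR_app in Hch as [_ [Hch _]].
      apply chainR_cons in Hch as [_ Hch]. apply chainR_cons in Hch as [Hch _].
      rewrite (Hch b) in Hcb; simpl; auto; discriminate. }
    exists (zu ++ (c,lb)::(a,l)::(b,l)::swl l lb zv). split; [|split; [split|]].
    + rewrite map_app; simpl; rewrite map_fst_swl; auto.
    + apply Forall_app; split; auto. constructor; simpl; auto. constructor; simpl; auto.
      constructor; simpl; auto. apply Forall_swl; auto.
    + intros l0 Hl0. rewrite !fl_app, !fl_cons, fl_swl by auto; cbn [fst snd].
      pose proof (Hch lb E) as H1. pose proof (Hch l Hl) as H2.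
      rewrite !fl_app, !fl_cons in H1, H2; cbn [fst snd] in H1, H2.
      rewrite Nat.eqb_refl in H1, H2. rewrite (proj2 (Nat.eqb_neq l lb)) in H1 by auto.
      rewrite (proj2 (Nat.eqb_neq lb l)) in H2 by auto.
      destruct (chK2b _ _ H (fl l zu) (fl l zv) (fl lb zu) (fl lb zv) a b c) as [G1 G2]; eauto.
      unfold swf. destruct (Nat.eqb_spec lb l0).
      * subst l0. rewrite (proj2 (Nat.eqb_neq lb l)) by auto. rewrite Nat.eqb_refl.
        rewrite (proj2 (Nat.eqb_neq l lb)) by auto. exact G2.
      * destruct (Nat.eqb_spec l l0).
        -- subst l0. rewrite Nat.eqb_refl. exact G1.
        -- rewrite (proj2 (Nat.eqb_neq l0 l)) by auto. rewrite (proj2 (Nat.eqb_neq l0 lb)) by auto.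
           specialize (Hch l0 Hl0). rewrite !fl_app, !fl_cons in Hch; cbn [fst snd] in Hch.
           rewrite (proj2 (Nat.eqb_neq lb l0)), (proj2 (Nat.eqb_neq l l0)) in Hch by auto. exact Hch.
    + rewrite !cnt_app, !cnt_cons, cnt_swl by auto; simpl. eqbs; lia.
Qed.

Inductive kmove (R : Letter -> Letter -> bool) : list Letter -> list Letter -> Prop :=
| km1 u v a b c : R c b = true -> R c a = false -> kmove R (u ++ c::b::a::v) (u ++ c::a::b::v)
| km2 u v a b c : R a b = true -> R c b = false -> kmove R (u ++ a::c::b::v) (u ++ c::a::b::v).

Definition knuth R := clos_refl_sym_trans (list Letter) (kmove R).

Lemma kmove_perm R w1 w2 : kmove R w1 w2 -> Permutation w1 w2.
Proof.
  intros []; apply Permutation_app_head.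
  - constructor; constructor.
  - constructor.
Qed.

Lemma knuth_perm R w1 w2 : knuth R w1 w2 -> Permutation w1 w2.
Proof.
  induction 1; eauto using kmove_perm, Permutation_sym, Permutation_trans.
Qed.

Lemma goodz_pair R k X p q Y : goodz R k (X ++ p :: q :: Y) -> snd p = snd q -> snd p <> 0 ->
  R (fst p) (fst q) = true.
Proof.
  intros [_ Hc] E Hn. specialize (Hc _ Hn). rewrite fl_app, !fl_cons in Hc.
  rewrite Nat.eqb_refl, <- E, Nat.eqb_refl in Hc.
  apply chainR_app in Hc as [_ [Hc _]]. apply chainR_cons in Hc as [Hc _]. apply Hc; simpl; auto.
Qed.

Lemma split3 (z : list (Letter * nat)) u x y t v :
  map fst z = u ++ x :: y :: t :: v ->
  exists zu px py pt zv, z = zu ++ px :: py :: pt :: zv /\ map fst zu = u /\ fst px = x /\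
    fst py = y /\ fst pt = t /\ map fst zv = v.
Proof.
  intros E. apply map_eq_app in E as [zu [zr [-> [E1 E2]]]].
  apply map_eq_cons in E2 as [px [z2 [-> [Ex E2]]]].
  apply map_eq_cons in E2 as [py [z3 [-> [Ey E2]]]].
  apply map_eq_cons in E2 as [pt [zv [-> [Et E2]]]].
  exists zu, px, py, pt, zv; repeat split; auto.
Qed.

Lemma ach_kmove1 P R (H : axR P R) w1 w2 k m : kmove R w1 w2 -> Forall P w1 ->
  ach R w1 k m -> ach R w2 k m.
Proof.
  intros Hm HP [z [Ez [Hg Hc]]]. rewrite Forall_forall in HP.
  destruct Hm as [u v a b c Hcb Hca|u v a b c Hab Hcb].
  - apply split3 in Ez as [zu [pc [pb [pa [zv [-> [Eu [Ec [Eb [Ea Ev]]]]]]]]]].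
    rewrite <- (app_nil_l (pb :: pa :: zv)), app_comm_cons, app_assoc in Hg, Hc.
    destruct (swap_good R k (zu ++ [pc]) pb pa zv Hg) as [Hg' Hc'].
    { intros E. destruct (Nat.eq_dec (snd pb) 0); auto. exfalso.
      pose proof (goodz_pair _ _ _ _ _ _ Hg E n) as X. rewrite Eb, Ea in X.
      rewrite (mixT _ _ H c b a) in X; try discriminate; auto; apply HP; apply in_or_app; simpl; auto. }
    exists ((zu ++ [pc]) ++ pa :: pb :: zv). split; [|split]; auto; [|lia].
    rewrite !map_app; simpl; rewrite Eu, Ec, Eb, Ea, Ev, <- app_assoc; auto.
  - apply split3 in Ez as [zu [pa [pc [pb [zv [-> [Eu [Ea [Ec [Eb Ev]]]]]]]]]].
    destruct (Nat.eq_dec (snd pa) (snd pc)) as [E|E];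
      [destruct (Nat.eq_dec (snd pa) 0) as [E0|E0]|].
    + destruct (swap_good R k zu pa pc (pb :: zv) Hg) as [Hg' Hc']; auto.
      exists (zu ++ pc :: pa :: pb :: zv); split; [|split]; auto; [|lia].
      rewrite map_app; simpl; rewrite Eu, Ec, Eb, Ea, Ev; auto.
    + destruct pa as [a0 la], pc as [c0 lc], pb as [b0 lb]; simpl in *; subst a0 b0 c0 lc.
      assert (PU : forall x, In x (map fst zu) -> P x) by (intros x Hx; apply HP; apply in_or_app; left; congruence).
      assert (PV : forall x, In x (map fst zv) -> P x) by (intros x Hx; apply HP; apply in_or_app; right; simpl; rewrite <- Ev; auto 5).
      destruct (hardK2 P R H k zu zv c a b lb la PU PV) as [z1 [E1 [G1 C1]]]; auto;
        try (apply HP; apply in_or_app; simpl; auto; fail).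
      exists z1; split; [|split]; auto; [|lia]. rewrite E1, Eu, Ev; auto.
    + destruct (swap_good R k zu pa pc (pb :: zv) Hg) as [Hg' Hc']; [intros; contradiction|].
      exists (zu ++ pc :: pa :: pb :: zv); split; [|split]; auto; [|lia].
      rewrite map_app; simpl; rewrite Eu, Ec, Eb, Ea, Ev; auto.
Qed.

Lemma ach_kmove2 P R (H : axR P R) w1 w2 k m : kmove R w1 w2 -> Forall P w1 ->
  ach R w2 k m -> ach R w1 k m.
Proof.
  intros Hm HP [z [Ez [Hg Hc]]]. rewrite Forall_forall in HP.
  destruct Hm as [u v a b c Hcb Hca|u v a b c Hab Hcb].
  - apply split3 in Ez as [zu [pc [pa [pb [zv [-> [Eu [Ec [Ea [Eb Ev]]]]]]]]]].
    destruct (Nat.eq_dec (snd pa) (snd pb)) as [E|E];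
      [destruct (Nat.eq_dec (snd pa) 0) as [E0|E0]|].
    + rewrite <- (app_nil_l (pa :: pb :: zv)), app_comm_cons, app_assoc in Hg, Hc.
      destruct (swap_good R k (zu ++ [pc]) pa pb zv Hg) as [Hg' Hc']; auto.
      exists ((zu ++ [pc]) ++ pb :: pa :: zv). split; [|split]; auto; [|lia].
      rewrite !map_app; simpl; rewrite Eu, Ec, Eb, Ea, Ev, <- app_assoc; auto.
    + destruct pa as [a0 la], pc as [c0 lc], pb as [b0 lb]; simpl in *; subst a0 b0 c0 lb.
      assert (PU : forall x, In x (map fst zu) -> P x) by (intros x Hx; apply HP; apply in_or_app; left; congruence).
      assert (PV : forall x, In x (map fst zv) -> P x) by (intros x Hx; apply HP; apply in_or_app; right; simpl; rewrite <- Ev; auto 5).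
      destruct (hardK1 P R H k zu zv c a b lc la PU PV) as [z1 [E1 [G1 C1]]]; auto;
        try (apply HP; apply in_or_app; simpl; auto; fail).
      exists z1; split; [|split]; auto; [|lia]. rewrite E1, Eu, Ev; auto.
    + rewrite <- (app_nil_l (pa :: pb :: zv)), app_comm_cons, app_assoc in Hg, Hc.
      destruct (swap_good R k (zu ++ [pc]) pa pb zv Hg) as [Hg' Hc']; [intros; contradiction|].
      exists ((zu ++ [pc]) ++ pb :: pa :: zv). split; [|split]; auto; [|lia].
      rewrite !map_app; simpl; rewrite Eu, Ec, Eb, Ea, Ev, <- app_assoc; auto.
  - apply split3 in Ez as [zu [pc [pa [pb [zv [-> [Eu [Ec [Ea [Eb Ev]]]]]]]]]].
    destruct (swap_good R k zu pc pa (pb :: zv) Hg) as [Hg' Hc'].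
    { intros E. destruct (Nat.eq_dec (snd pc) 0); auto. exfalso.
      pose proof (goodz_pair _ _ _ _ _ _ Hg E n) as X. rewrite Ec, Ea in X.
      rewrite (axT _ _ H c a b) in Hcb; try discriminate; auto; apply HP; apply in_or_app; simpl; auto. }
    exists (zu ++ pa :: pc :: pb :: zv). split; [|split]; auto; [|lia].
    rewrite map_app; simpl; rewrite Eu, Ec, Eb, Ea, Ev; auto.
Qed.

Lemma Forall_perm {T} (P : T -> Prop) l1 l2 : Permutation l1 l2 -> Forall P l1 -> Forall P l2.
Proof.
  intros Hp H; rewrite Forall_forall in *; intros x Hx; apply H.
  apply (Permutation_in x (Permutation_sym Hp) Hx).
Qed.

Lemma ach_knuth P R (H : axR P R) w1 w2 k m : knuth R w1 w2 -> Forall P w1 ->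
  (ach R w1 k m <-> ach R w2 k m).
Proof.
  intros Hk. induction Hk as [x y Hm|x|x y Hxy IH|x y z Hxy IH1 Hyz IH2]; intros HP.
  - split; [eapply ach_kmove1|eapply ach_kmove2]; eauto.
  - tauto.
  - assert (Forall P x) by (eapply Forall_perm; [apply Permutation_sym, (knuth_perm R); eauto|]; auto).
    specialize (IH H0); tauto.
  - assert (Forall P y) by (eapply Forall_perm; [apply (knuth_perm R); eauto|]; auto).
    rewrite IH1, IH2; tauto.
Qed.

Lemma knuth_neg R w1 w2 : knuth (negR R) w1 w2 -> knuth R w1 w2.
Proof.
  unfold knuth; induction 1 as [x y Hm| | |]; eauto using rst_refl, rst_sym, rst_trans.
  apply rst_sym, rst_step. destruct Hm as [u v a b c H1 H2|u v a b c H1 H2]; unfold negR in *;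
    apply negb_true_iff in H1; apply negb_false_iff in H2.
  - apply km1; auto.
  - apply km2; auto.
Qed.

Lemma knuth_ctx R w1 w2 p q : knuth R w1 w2 -> knuth R (p ++ w1 ++ q) (p ++ w2 ++ q).
Proof.
  unfold knuth; induction 1 as [x y Hm| | |]; eauto using rst_refl, rst_sym, rst_trans.
  apply rst_step. destruct Hm as [u v a b c H1 H2|u v a b c H1 H2].
  - replace (p ++ (u ++ c :: b :: a :: v) ++ q) with ((p ++ u) ++ c :: b :: a :: (v ++ q)) by (rewrite <- !app_assoc; auto).
    replace (p ++ (u ++ c :: a :: b :: v) ++ q) with ((p ++ u) ++ c :: a :: b :: (v ++ q)) by (rewrite <- !app_assoc; auto).
    apply km1; auto.
  - replace (p ++ (u ++ a :: c :: b :: v) ++ q) with ((p ++ u) ++ a :: c :: b :: (v ++ q)) by (rewrite <- !app_assoc; auto).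
    replace (p ++ (u ++ c :: a :: b :: v) ++ q) with ((p ++ u) ++ c :: a :: b :: (v ++ q)) by (rewrite <- !app_assoc; auto).
    apply km2; auto.
Qed.

Fixpoint rins (R : Letter -> Letter -> bool) (x : Letter) (r : list Letter) : option Letter * list Letter :=
  match r with
  | [] => (None, [x])
  | e :: r' => if R e x then let (b, r'') := rins R x r' in (b, e :: r'') else (Some e, x :: r')
  end.

Fixpoint tins (R : Letter -> Letter -> bool) (x : Letter) (T : list (list Letter)) : list (list Letter) :=
  match T with
  | [] => [[x]]
  | r :: T' => match rins R x r with
               | (None, r') => r' :: T'
               | (Some y, r') => r' :: tins R y T'
               end
  end.

Definition rsk R (w : list Letter) := fold_left (fun T x => tins R x T) w [].

Definition word (T : list (list Letter)) := concat (rev T).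

Lemma rins_none R x r r' : rins R x r = (None, r') -> r' = r ++ [x] /\ forall e, In e r -> R e x = true.
Proof.
  revert r'; induction r as [|e r IH]; simpl; intros r' E.
  - inversion E; split; auto.
  - destruct (R e x) eqn:Ee; [|discriminate].
    destruct (rins R x r) as [b r''] eqn:E2. inversion E; subst.
    destruct (IH _ eq_refl) as [-> H]. split; auto. intros e' [<-|He]; auto.
Qed.

Lemma rins_some R x r y r' : rins R x r = (Some y, r') ->
  exists a b, r = a ++ y :: b /\ r' = a ++ x :: b /\ (forall e, In e a -> R e x = true) /\ R y x = false.
Proof.
  revert r'; induction r as [|e r IH]; simpl; intros r' E.
  - discriminate.
  - destruct (R e x) eqn:Ee.
    + destruct (rins R x r) as [b r''] eqn:E2. inversion E; subst.
      destruct (IH _ eq_refl) as [a [b' [-> [-> [H1 H2]]]]].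
      exists (e :: a), b'; repeat split; auto. intros e' [<-|He]; auto.
    + inversion E; subst. exists [], r; repeat split; auto.
Qed.

Lemma rins_perm R x r : Permutation (snd (rins R x r) ++ match fst (rins R x r) with Some y => [y] | None => [] end) (x :: r).
Proof.
  destruct (rins R x r) as [[y|] r'] eqn:E; simpl.
  - apply rins_some in E as [a [b [-> [-> _]]]].
    rewrite <- app_assoc; simpl. apply Permutation_sym, Permutation_cons_app.
    apply Permutation_app_head, Permutation_cons_append.
  - apply rins_none in E as [-> _]. rewrite app_nil_r. apply Permutation_sym, Permutation_cons_append.
Qed.

Lemma tins_perm R x T : Permutation (concat (tins R x T)) (x :: concat T).
Proof.
  revert x; induction T as [|r T IH]; intros x; simpl.
  - auto.
  - pose proof (rins_perm R x r) as Hp.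
    destruct (rins R x r) as [[y|] r'] eqn:E; simpl in *.
    + eapply Permutation_trans; [apply Permutation_app_head, IH|].
      replace (r' ++ y :: concat T) with ((r' ++ [y]) ++ concat T) by (rewrite <- app_assoc; auto).
      change (x :: r ++ concat T) with ((x :: r) ++ concat T). apply Permutation_app_tail; auto.
    + rewrite app_nil_r in Hp. change (x :: r ++ concat T) with ((x :: r) ++ concat T).
      apply Permutation_app_tail; auto.
Qed.

Lemma rsk_app R w x : rsk R (w ++ [x]) = tins R x (rsk R w).
Proof. unfold rsk; rewrite fold_left_app; auto. Qed.

Lemma rsk_perm R w : Permutation (concat (rsk R w)) w.
Proof.
  induction w as [|x w IH] using rev_ind; simpl; auto.
  rewrite rsk_app. eapply Permutation_trans; [apply tins_perm|].
  eapply Permutation_trans; [apply perm_skip, IH|]. apply Permutation_cons_append.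
Qed.

Lemma move_x P R (H : axR P R) x b : forall c, P x -> (forall e, In e (c :: b) -> P e) ->
  chainR R (c :: b) -> (forall e, In e (c :: b) -> R e x = false) ->
  knuth R (c :: b ++ [x]) (c :: x :: b).
Proof.
  induction b as [|b1 b IHb]; intros c Px HP Hch Hx; simpl.
  - apply rst_refl.
  - apply chainR_cons in Hch as [Hc Hch].
    eapply rst_trans.
    + apply (knuth_ctx R (b1 :: b ++ [x]) (b1 :: x :: b) [c] []) in IHb.
      * simpl in IHb; rewrite !app_nil_r in IHb; exact IHb.
      * auto.
      * intros e He; apply HP; simpl; auto.
      * auto.
      * intros e He; apply Hx; simpl; auto.
    + apply rst_step. apply (km1 R [] b x b1 c); auto. apply Hc; simpl; auto.
      apply Hx; simpl; auto.
Qed.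

Lemma move_y P R (H : axR P R) y t rest a : P y -> 
  chainR R (a ++ [t]) -> (forall e, In e (a ++ [t]) -> R y e = false) ->
  knuth R (a ++ y :: t :: rest) (y :: a ++ t :: rest).
Proof.
  intros Py; induction a as [|a1 a IHa]; intros Hch Hy; simpl.
  - apply rst_refl.
  - simpl in Hch. apply chainR_cons in Hch as [Hc Hch].
    eapply rst_trans.
    + apply (knuth_ctx R (a ++ y :: t :: rest) (y :: a ++ t :: rest) [a1] []) in IHa; auto.
      * simpl in IHa; rewrite !app_nil_r in IHa; exact IHa.
      * intros e He; apply Hy; simpl; auto.
    + apply rst_step. destruct a as [|a2 a].
      * simpl. apply (km2 R [] rest a1 t y); simpl in *; auto.
      * simpl. apply (km2 R [] (a ++ t :: rest) a1 a2 y); simpl in *; auto.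
Qed.

Lemma row_knuth P R (H : axR P R) x r y r' : P x -> Forall P r -> chainR R r ->
  rins R x r = (Some y, r') -> knuth R (r ++ [x]) (y :: r').
Proof.
  intros Px HP Hch E. rewrite Forall_forall in HP.
  apply rins_some in E as [a [b [-> [-> [Ha Hyx]]]]].
  apply chainR_app in Hch as [Ha' [Hyb Hab]].
  assert (Py : P y) by (apply HP; apply in_or_app; simpl; auto).
  assert (KM : knuth R (y :: b ++ [x]) (y :: x :: b)).
  { apply (move_x P R H x b y Px); auto.
    + intros e He; apply HP; apply in_or_app; auto.
    + intros e [<-|He]; auto. apply chainR_cons in Hyb as [Hyb _].
      apply (mixT _ _ H y e x); auto. apply HP; apply in_or_app; simpl; auto. }
  pose proof (knuth_ctx R _ _ a [] KM) as K. rewrite !app_nil_r in K.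
  eapply rst_trans.
  - rewrite <- app_assoc. simpl. exact K.
  - apply move_y with (P := P); auto.
    + apply chainR_app; repeat split; auto using chainR_one. intros e f He [<-|[]]; auto.
    + intros e He. apply in_app_or in He as [He|[<-|[]]]; auto.
      apply (mixT2 _ _ H y e x); auto; apply HP; apply in_or_app; auto.
Qed.

Lemma word_cons r T : word (r :: T) = word T ++ r.
Proof. unfold word; simpl; rewrite concat_app; simpl; rewrite app_nil_r; auto. Qed.

Lemma tab_knuth P R (H : axR P R) x T : P x -> Forall P (concat T) -> Forall (chainR R) T ->
  knuth R (word T ++ [x]) (word (tins R x T)).
Proof.
  revert x; induction T as [|r T IH]; intros x Px HP Hch; simpl.
  - apply rst_refl.
  - inversion Hch; subst. simpl in HP. apply Forall_app in HP as [HPr HPT].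
    destruct (rins R x r) as [[y|] r'] eqn:E; rewrite !word_cons.
    + assert (K1 := row_knuth P R H x r y r' Px HPr H2 E).
      pose proof (knuth_ctx R _ _ (word T) [] K1) as K2. rewrite !app_nil_r in K2.
      assert (Py : P y).
      { apply rins_some in E as [a [b [-> _]]]. rewrite Forall_forall in HPr; apply HPr; apply in_or_app; simpl; auto. }
      pose proof (knuth_ctx R _ _ [] r' (IH y Py HPT H3)) as K3. simpl in K3.
      rewrite <- !app_assoc in K3. simpl in K3.
      eapply rst_trans; [|exact K3]. rewrite <- app_assoc; exact K2.
    + apply rins_none in E as [-> _]. rewrite <- app_assoc. apply rst_refl.
Qed.

Definition d0 : Letter := Le 0.

Definition dom R (r s : list Letter) :=
  length s <= length r /\ forall j, j < length s -> R (nth j s d0) (nth j r d0) = false.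

Fixpoint tabc R (T : list (list Letter)) : Prop :=
  match T with
  | [] => True
  | r :: T' => chainR R r /\ r <> [] /\
      match T' with [] => True | s :: _ => dom R r s end /\ tabc R T'
  end.

Lemma nth_upd (a b : list Letter) x y i d : i <> length a ->
  nth i (a ++ x :: b) d = nth i (a ++ y :: b) d.
Proof.
  intros Hi. destruct (Nat.lt_ge_cases i (length a)).
  - rewrite !app_nth1; auto.
  - rewrite !app_nth2 by lia. destruct (i - length a) eqn:E; [lia|]; auto.
Qed.

Lemma chain_repl P R (H : axR P R) a b x y : (forall e, In e (x :: a ++ y :: b) -> P e) ->
  chainR R (a ++ y :: b) -> (forall e, In e a -> R e x = true) -> R y x = false ->
  chainR R (a ++ x :: b).
Proof.
  intros HP Hch Ha Hyx. apply chainR_app in Hch as [H1 [H2 H3]].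
  apply chainR_cons in H2 as [H4 H5].
  apply chainR_app; repeat split; auto.
  - apply chainR_cons; split; auto. intros e He.
    apply (mixN2 _ _ H y e x); auto; apply HP; simpl; rewrite in_app_iff; simpl; auto.
  - intros e f He [<-|Hf]; auto. apply H3; simpl; auto.
Qed.

Lemma chain_snoc R r x : chainR R r -> (forall e, In e r -> R e x = true) -> chainR R (r ++ [x]).
Proof.
  intros H1 H2; apply chainR_app; repeat split; auto using chainR_one.
  intros e f He [<-|[]]; auto.
Qed.

Lemma dom_ins P R (H : axR P R) x r y r' s : (forall e, In e (x :: r ++ s) -> P e) ->
  dom R r s -> rins R x r = (Some y, r') -> dom R r' (snd (rins R y s)).
Proof.
  intros HP [Hl Hd] E. apply rins_some in E as [a [b [-> [-> [Ha Hyx]]]]].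
  assert (PA : forall e, In e a -> P e) by (intros; apply HP; simpl; rewrite !in_app_iff; auto).
  assert (PS : forall e, In e s -> P e) by (intros; apply HP; simpl; rewrite !in_app_iff; auto).
  assert (Px : P x) by (apply HP; simpl; auto).
  assert (Py : P y) by (apply HP; simpl; rewrite !in_app_iff; simpl; auto).
  assert (Hj : nth (length a) (a ++ y :: b) d0 = y) by (apply nth_middle).
  assert (Hj' : nth (length a) (a ++ x :: b) d0 = x) by (apply nth_middle).
  rewrite length_app in Hl; simpl in Hl.
  destruct (rins R y s) as [[z|] s'] eqn:E2; simpl.
  - apply rins_some in E2 as [c [d [-> [-> [Hc Hzy]]]]].
    rewrite length_app in Hl; simpl in Hl.
    assert (Hjj : length c <= length a).
    { destruct (Nat.le_gt_cases (length c) (length a)); auto. exfalso.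
      specialize (Hd (length a)). rewrite length_app, Hj in Hd; simpl in Hd.
      assert (X := Hd ltac:(lia)). rewrite app_nth1 in X by lia.
      rewrite (Hc (nth (length a) c d0)) in X; [discriminate|]. apply nth_In; auto. }
    split; [rewrite !length_app; simpl; lia|].
    intros i Hi. rewrite length_app in Hi; simpl in Hi.
    destruct (Nat.eq_dec i (length c)) as [->|Hic].
    + rewrite nth_middle. destruct (Nat.eq_dec (length c) (length a)) as [Ec|Ec].
      * rewrite Ec, Hj'; auto.
      * rewrite app_nth1 by lia. apply (mixT2 _ _ H y (nth (length c) a d0) x); auto.
        -- apply PA, nth_In; lia.
        -- apply Ha, nth_In; lia.
    + destruct (Nat.eq_dec i (length a)) as [->|Hia].
      * rewrite Hj', (nth_upd c d y z) by auto.
        specialize (Hd (length a)). rewrite length_app, Hj in Hd; simpl in Hd.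
        assert (Pn : P (nth (length a) (c ++ z :: d) d0)) by (apply PS, nth_In; rewrite length_app; simpl; lia).
        assert (Hn := Hd ltac:(lia)).
        apply (nT _ _ H _ y x); auto.
      * rewrite (nth_upd c d y z), (nth_upd a b x y) by auto.
        apply Hd. rewrite length_app; simpl; lia.
  - apply rins_none in E2 as [-> Hs].
    assert (Hls : length s <= length a).
    { destruct (Nat.le_gt_cases (length s) (length a)); auto. exfalso.
      specialize (Hd (length a) H0). rewrite Hj in Hd. rewrite (Hs (nth (length a) s d0)) in Hd; [discriminate|]. apply nth_In; auto. }
    split; [rewrite !length_app; simpl; lia|].
    intros i Hi. rewrite length_app in Hi; simpl in Hi.
    destruct (Nat.eq_dec i (length s)) as [->|His].
    + rewrite nth_middle. destruct (Nat.eq_dec (length s) (length a)) as [Ec|Ec].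
      * rewrite Ec, Hj'; auto.
      * rewrite app_nth1 by lia. apply (mixT2 _ _ H y (nth (length s) a d0) x); auto.
        -- apply PA, nth_In; lia.
        -- apply Ha, nth_In; lia.
    + rewrite app_nth1 by lia. rewrite (nth_upd a b x y) by lia. apply Hd; lia.
Qed.

Lemma tins_nil R y : tins R y [] = [[y]].
Proof. auto. Qed.

Lemma tins_head R y s T : exists T', tins R y (s :: T) = snd (rins R y s) :: T'.
Proof. simpl; destruct (rins R y s) as [[z|] s']; simpl; eauto. Qed.

Lemma tab_ins P R (H : axR P R) x T : tabc R T -> (forall e, In e (x :: concat T) -> P e) ->
  tabc R (tins R x T).
Proof.
  revert x; induction T as [|r T IH]; intros x Ht HP.
  - simpl; repeat split; auto using chainR_one. discriminate.
  - destruct Ht as [Hc [Hne [Hd Ht]]]. simpl.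
    assert (HPr : forall e, In e (x :: r) -> P e) by (intros e [<-|He]; apply HP; simpl; rewrite ?in_app_iff; auto).
    destruct (rins R x r) as [[y|] r'] eqn:E.
    + pose proof E as E'. apply rins_some in E' as [a [b [Er [Er' [Ha Hyx]]]]].
      assert (Py : P y) by (apply HPr; right; rewrite Er; apply in_or_app; simpl; auto).
      assert (HPT : forall e, In e (y :: concat T) -> P e).
      { intros e [<-|He]; auto. apply HP; simpl; rewrite in_app_iff; auto. }
      split; [|split; [|split]].
      * rewrite Er'. apply (chain_repl P R H a b x y); auto.
        -- intros e He; apply HPr; destruct He as [<-|He]; [left; auto|right; rewrite Er; auto].
        -- rewrite <- Er; auto.
      * rewrite Er'; destruct a; discriminate.
      * destruct T as [|s T].
        -- simpl. change [y] with (snd (rins R y [])).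
           apply (dom_ins P R H x r y r' []); auto.
           split; simpl; [lia|intros; lia].
        -- destruct (tins_head R y s T) as [T' ET]. rewrite ET.
           apply (dom_ins P R H x r y r' s); auto.
           intros e He; apply HP; simpl in *; rewrite !in_app_iff in *; tauto.
      * apply IH; auto; destruct T; simpl in *; tauto.
    + apply rins_none in E as [-> Hs]. split; [|split; [|split]]; auto.
      * apply chain_snoc; auto.
      * destruct r; discriminate.
      * destruct T as [|s T]; auto. destruct Hd as [Hl Hd]. split.
        -- rewrite length_app; simpl; lia.
        -- intros j Hj. rewrite app_nth1 by lia. apply Hd; auto.
Qed.

Lemma tabc_rows R T : tabc R T -> Forall (chainR R) T.
Proof.
  induction T as [|r T IH]; simpl; auto. intros [H1 [_ [_ H2]]]; constructor; auto.
Qed.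

Lemma rsk_tab P R (H : axR P R) w : Forall P w -> tabc R (rsk R w).
Proof.
  induction w as [|x w IH] using rev_ind; intros HP.
  - simpl; auto.
  - apply Forall_app in HP as [HP1 HP2]. rewrite rsk_app. apply tab_ins with (P := P); auto.
    intros e He. assert (In e (w ++ [x])).
    { apply (Permutation_in e (l := x :: concat (rsk R w))); auto.
      eapply Permutation_trans; [apply perm_skip, rsk_perm|]. apply Permutation_cons_append. }
    rewrite Forall_forall in HP1, HP2. apply in_app_or in H0 as [H0|H0]; auto.
Qed.

Lemma rsk_knuth P R (H : axR P R) w : Forall P w -> knuth R w (word (rsk R w)).
Proof.
  induction w as [|x w IH] using rev_ind; intros HP.
  - apply rst_refl.
  - apply Forall_app in HP as [HP1 HP2]. rewrite rsk_app.
    eapply rst_trans.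
    + pose proof (knuth_ctx R _ _ [] [x] (IH HP1)) as K; simpl in K. exact K.
    + apply tab_knuth with (P := P); auto.
      * inversion HP2; auto.
      * eapply Forall_perm; [apply Permutation_sym, rsk_perm|]; auto.
      * apply tabc_rows, rsk_tab with (P := P); auto.
Qed.

Lemma split_concat (z : list (Letter * nat)) L : map fst z = concat L ->
  exists Z, map (map fst) Z = L /\ z = concat Z.
Proof.
  revert z; induction L as [|r L IH]; intros z E; simpl in *.
  - exists []; destruct z; simpl in *; auto; discriminate.
  - apply map_eq_app in E as [z1 [z2 [-> [E1 E2]]]].
    destruct (IH _ E2) as [Z [<- ->]]. exists (z1 :: Z); simpl; rewrite E1; auto.
Qed.

Lemma split_word (z : list (Letter * nat)) T : map fst z = word T ->
  exists Z, map (map fst) Z = T /\ z = concat (rev Z).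
Proof.
  unfold word; intros E. apply split_concat in E as [Z [E1 ->]].
  exists (rev Z); rewrite rev_involutive, map_rev, E1, rev_involutive; auto.
Qed.

Lemma goodz_app R k z1 z2 : goodz R k (z1 ++ z2) ->
  goodz R k z1 /\ goodz R k z2 /\
  (forall l x y, l <> 0 -> In x (fl l z1) -> In y (fl l z2) -> R x y = true).
Proof.
  intros [HF Hc]. apply Forall_app in HF as [HF1 HF2].
  split; [|split]; [split; auto..|].
  - intros l Hl; specialize (Hc l Hl); rewrite fl_app in Hc; apply chainR_app in Hc; tauto.
  - intros l Hl; specialize (Hc l Hl); rewrite fl_app in Hc; apply chainR_app in Hc; tauto.
  - intros l x y Hl; specialize (Hc l Hl); rewrite fl_app in Hc; apply chainR_app in Hc as [_ [_ Hc]]; auto.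
Qed.

Lemma in_fl_intro l (z : list (Letter * nat)) p : In p z -> snd p = l -> In (fst p) (fl l z).
Proof.
  intros Hp E. unfold fl. apply in_map, filter_In; split; auto. rewrite E, Nat.eqb_refl; auto.
Qed.

Lemma cnt_concat_rev Z : cnt (concat (rev Z)) = list_sum (map cnt Z).
Proof.
  induction Z as [|r Z IH]; simpl; auto. rewrite concat_app, cnt_app, IH; simpl; rewrite app_nil_r; lia.
Qed.

Definition nzl (z : list (Letter * nat)) := map snd (filter (fun p => negb (Nat.eqb (snd p) 0)) z).

Lemma nzl_len z : length (nzl z) = cnt z.
Proof. unfold nzl, cnt; rewrite length_map; auto. Qed.

Lemma nodup_bound k (L : list nat) : NoDup L -> (forall x, In x L -> x <> 0 /\ x <= k) -> length L <= k.
Proof.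
  intros H1 H2. replace k with (length (seq 1 k)) by apply length_seq.
  apply NoDup_incl_length; auto. intros x Hx. apply in_seq. specialize (H2 x Hx); lia.
Qed.

Lemma nzl_in z x : In x (nzl z) -> exists p, In p z /\ snd p = x /\ x <> 0.
Proof.
  unfold nzl; intros Hx; apply in_map_iff in Hx as [p [<- Hp]].
  apply filter_In in Hp as [Hp E]. exists p; repeat split; auto.
  destruct (Nat.eqb_spec (snd p) 0); simpl in E; auto; discriminate.
Qed.

Lemma row_cnt R k zr : chainR (negR R) (map fst zr) -> goodz R k zr -> cnt zr <= k.
Proof.
  intros Hn Hg. rewrite <- nzl_len. apply nodup_bound.
  - induction zr as [|p zr IH]; simpl; [constructor|].
    simpl in Hn. apply chainR_cons in Hn as [Hn1 Hn2].
    assert (Hg' : goodz R k zr) by (apply (goodz_app R k [p] zr) in Hg; tauto).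
    unfold nzl; simpl. destruct (Nat.eqb_spec (snd p) 0); simpl; auto.
    constructor; auto. intros Hin. apply nzl_in in Hin as [q [Hq [Eq _]]].
    destruct Hg as [_ Hc]. specialize (Hc (snd p) n). rewrite fl_cons, Nat.eqb_refl in Hc.
    apply chainR_cons in Hc as [Hc _].
    specialize (Hc (fst q) (in_fl_intro _ _ _ Hq Eq)).
    specialize (Hn1 (fst q) (in_map _ _ _ Hq)). unfold negR in Hn1. rewrite Hc in Hn1; discriminate.
  - intros x Hx. apply nzl_in in Hx as [p [Hp [<- Hn0]]]. split; auto.
    destruct Hg as [HF _]. rewrite Forall_forall in HF; auto.
Qed.

Lemma cnt_le_len z : cnt z <= length z.
Proof. unfold cnt; apply filter_length_le. Qed.

Lemma bound_rows R k Z : Forall (fun zr => chainR (negR R) (map fst zr)) Z ->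
  goodz R k (concat (rev Z)) -> cnt (concat (rev Z)) <= list_sum (map (fun zr => Nat.min k (length zr)) Z).
Proof.
  induction Z as [|zr Z IH]; simpl; intros HF Hg; auto.
  inversion HF; subst. rewrite concat_app in Hg; simpl in Hg; rewrite app_nil_r in Hg.
  apply goodz_app in Hg as [Hg1 [Hg2 _]].
  rewrite concat_app, cnt_app; simpl; rewrite app_nil_r.
  specialize (IH H2 Hg1). pose proof (row_cnt R k zr H1 Hg2). pose proof (cnt_le_len zr). lia.
Qed.

Lemma dom_trans P R (H : axR P R) r s t : (forall e, In e (r ++ s ++ t) -> P e) ->
  dom R r s -> dom R s t -> dom R r t.
Proof.
  intros HP [H1 H2] [H3 H4]. split; [lia|]. intros j Hj.
  assert (Pt : P (nth j t d0)) by (apply HP; rewrite !in_app_iff; right; right; apply nth_In; lia).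
  assert (Ps : P (nth j s d0)) by (apply HP; rewrite !in_app_iff; right; left; apply nth_In; lia).
  assert (Pr : P (nth j r d0)) by (apply HP; rewrite !in_app_iff; left; apply nth_In; lia).
  apply (nT _ _ H _ (nth j s d0)); auto; try apply H4; try apply H2; lia.
Qed.

Lemma tab_below P R (H : axR P R) T' : forall r, tabc R (r :: T') -> Forall P (concat (r :: T')) ->
  forall s, In s T' -> dom R r s.
Proof.
  induction T' as [|s1 T'' IH]; intros r Ht HP s Hs; [destruct Hs|].
  destruct Ht as [_ [_ [Hd Ht]]]. destruct Hs as [<-|Hs]; auto.
  simpl in HP. rewrite Forall_app in HP; destruct HP as [HPr HPT].
  apply (dom_trans P R H r s1 s); auto.
  - rewrite Forall_forall in HPr, HPT. intros e He. rewrite !in_app_iff in He.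
    destruct He as [He|[He|He]]; auto; apply HPT; simpl; rewrite in_app_iff; auto.
    right; apply in_concat; eauto.
Qed.

Definition colopt c (zr : list (Letter * nat)) : list nat :=
  match nth_error zr c with Some p => if Nat.eqb (snd p) 0 then [] else [snd p] | None => [] end.
Definition colL c Z := flat_map (colopt c) Z.
Definition cge c (Z : list (list (Letter * nat))) := list_sum (map (fun zr => cnt (skipn c zr)) Z).

Lemma cnt_skipn c zr : cnt (skipn c zr) = length (colopt c zr) + cnt (skipn (S c) zr).
Proof.
  revert c; induction zr as [|p zr IH]; intros c; unfold colopt in *; simpl.
  - destruct c; auto.
  - destruct c; simpl.
    + rewrite cnt_cons. destruct (snd p =? 0); auto.
    + apply IH.
Qed.

Lemma cge_step c Z : cge c Z = length (colL c Z) + cge (S c) Z.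
Proof.
  induction Z as [|zr Z IH]; [reflexivity|]. unfold cge, colL, list_sum in *. cbn [map fold_right flat_map].
  rewrite cnt_skipn, IH, length_app; lia.
Qed.

Lemma cge_big c Z : Forall (fun zr => length zr <= c) Z -> cge c Z = 0.
Proof.
  induction 1; [reflexivity|]. unfold cge, list_sum in *; cbn [map fold_right]. rewrite skipn_all2 by auto. simpl; lia.
Qed.

Lemma cge0 Z : cge 0 Z = list_sum (map cnt Z).
Proof. unfold cge; f_equal. Qed.

Lemma colL_len c Z : length (colL c Z) <= length (filter (fun x => Nat.ltb c x) (map (@length _) Z)).
Proof.
  induction Z as [|zr Z IH]; simpl; auto. rewrite length_app. unfold colopt.
  destruct (nth_error zr c) eqn:E.
  - assert (c < length zr) by (apply nth_error_Some; congruence).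
    rewrite (proj2 (Nat.ltb_lt c (length zr))) by auto. simpl. destruct (snd p =? 0); simpl; lia.
  - destruct (Nat.ltb c (length zr)); simpl; lia.
Qed.

Lemma colL_range R k c Z : goodz R k (concat (rev Z)) -> forall x, In x (colL c Z) -> x <> 0 /\ x <= k.
Proof.
  intros [HF _] x Hx. unfold colL in Hx. apply in_flat_map in Hx as [zr [Hzr Hx]].
  unfold colopt in Hx. destruct (nth_error zr c) as [p|] eqn:E; [|destruct Hx].
  destruct (Nat.eqb_spec (snd p) 0); [destruct Hx|]. destruct Hx as [<-|[]]. split; auto.
  rewrite Forall_forall in HF. apply HF. apply in_concat. exists zr; split; [apply in_rev; rewrite rev_involutive; auto|].
  eapply nth_error_In; eauto.
Qed.

Lemma nth_error_fst (zr : list (Letter * nat)) c p : nth_error zr c = Some p ->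
  nth c (map fst zr) d0 = fst p /\ c < length zr.
Proof.
  intros E. split.
  - rewrite (nth_error_nth' _ (d0,0)) in E by (apply nth_error_Some; congruence).
    injection E as E1. rewrite <- E1. apply (map_nth fst zr (d0, 0) c).
  - apply nth_error_Some; congruence.
Qed.

Lemma colL_nodup P R (H : axR P R) k c Z : tabc R (map (map fst) Z) ->
  Forall P (concat (map (map fst) Z)) -> goodz R k (concat (rev Z)) -> NoDup (colL c Z).
Proof.
  induction Z as [|zr Z IH]; intros Ht HP Hg; simpl; [constructor|].
  simpl in Hg. rewrite concat_app in Hg; simpl in Hg; rewrite app_nil_r in Hg.
  apply goodz_app in Hg as [Hg1 [Hg2 Hx]].
  assert (Ht' : tabc R (map (map fst) Z)) by (simpl in Ht; tauto).
  assert (HP' : Forall P (concat (map (map fst) Z))) by (simpl in HP; apply Forall_app in HP; tauto).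
  specialize (IH Ht' HP' Hg1).
  unfold colopt at 1. destruct (nth_error zr c) as [p|] eqn:E; simpl; auto.
  destruct (Nat.eqb_spec (snd p) 0); simpl; auto.
  constructor; auto. intros Hin. unfold colL in Hin. apply in_flat_map in Hin as [zs [Hzs Hin]].
  unfold colopt in Hin. destruct (nth_error zs c) as [q|] eqn:E2; [|destruct Hin].
  destruct (Nat.eqb_spec (snd q) 0); [destruct Hin|]. destruct Hin as [Eq|[]].
  assert (Rqp : R (fst q) (fst p) = true).
  { apply (Hx (snd p)); auto.
    - apply in_fl_intro; auto. apply in_concat. exists zs; split; [apply in_rev; rewrite rev_involutive; auto|].
      eapply nth_error_In; eauto.
    - apply in_fl_intro; auto. eapply nth_error_In; eauto. }
  assert (Hd : dom R (map fst zr) (map fst zs)).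
  { apply (tab_below P R H (map (map fst) Z)); auto. apply in_map; auto. }
  destruct (nth_error_fst _ _ _ E) as [Ep Hcp]. destruct (nth_error_fst _ _ _ E2) as [Eq' Hcq].
  destruct Hd as [_ Hd]. specialize (Hd c). rewrite Ep, Eq', length_map in Hd.
  rewrite Hd in Rqp; auto; discriminate.
Qed.

Fixpoint noninc (l : list nat) : Prop :=
  match l with
  | x :: ((y :: _) as t) => y <= x /\ noninc t
  | _ => True
  end.

Lemma tabc_noninc R T : tabc R T -> noninc (map (@length _) T).
Proof.
  induction T as [|r T IH]; simpl; auto. intros [_ [_ [Hd Ht]]].
  destruct T as [|s T]; simpl; auto. destruct Hd as [Hl _]. split; auto. apply IH; auto.
Qed.

Lemma noninc_le x l : noninc (x :: l) -> forall y, In y l -> y <= x.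
Proof.
  revert x; induction l as [|z l IH]; intros x Hn y Hy; [destruct Hy|].
  destruct Hn as [Hzx Hn]. destruct Hy as [<-|Hy]; auto.
  specialize (IH z Hn y Hy); lia.
Qed.

Lemma filter_small c l : (forall y, In y l -> y <= c) -> filter (fun x => Nat.ltb c x) l = [].
Proof.
  induction l as [|y l IH]; intros H; simpl; auto.
  destruct (Nat.ltb_spec c y); [specialize (H y (or_introl eq_refl)); lia|]. apply IH; intros; apply H; simpl; auto.
Qed.

Lemma in_firstn' {T} k (l : list T) y : In y (firstn k l) -> In y l.
Proof.
  revert k; induction l as [|z l IH]; intros k Hy; destruct k; simpl in *; try tauto.
  destruct Hy; auto. right; eapply IH; eauto.
Qed.

Lemma filter_firstn_noninc c k l : noninc l ->
  length (filter (fun x => Nat.ltb c x) (firstn k l)) = Nat.min k (length (filter (fun x => Nat.ltb c x) l)).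
Proof.
  revert k; induction l as [|x l IH]; intros k Hn; simpl.
  - destruct k; auto.
  - destruct k; simpl; auto.
    assert (Hn' : noninc l) by (destruct l; simpl in *; tauto).
    destruct (Nat.ltb_spec c x).
    + simpl. rewrite IH; auto.
    + rewrite !filter_small; simpl; auto.
      * intros y Hy. pose proof (noninc_le x l Hn y Hy); lia.
      * intros y Hy. apply in_firstn' in Hy. pose proof (noninc_le x l Hn y Hy); lia.
Qed.

Lemma Sc_step c l : list_sum (map (fun x => x - c) l) =
  list_sum (map (fun x => x - S c) l) + length (filter (fun x => Nat.ltb c x) l).
Proof.
  induction l as [|x l IH]; simpl; auto. rewrite IH.
  destruct (Nat.ltb_spec c x); simpl; lia.
Qed.

Lemma bound_cols P R (H : axR P R) k Z : tabc R (map (map fst) Z) ->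
  Forall P (concat (map (map fst) Z)) -> goodz R k (concat (rev Z)) ->
  cnt (concat (rev Z)) <= list_sum (firstn k (map (@length _) Z)).
Proof.
  intros Ht HP Hg.
  assert (Hni : noninc (map (@length _) Z)).
  { pose proof (tabc_noninc R _ Ht) as X. rewrite map_map in X.
    replace (map (fun x => length (map fst x)) Z) with (map (@length _) Z) in X; auto.
    apply map_ext; intros; rewrite length_map; auto. }
  assert (Main : forall n c, Forall (fun zr => length zr <= c + n) Z ->
     cge c Z <= list_sum (map (fun x => x - c) (firstn k (map (@length _) Z)))).
  { induction n as [|n IHn]; intros c HF.
    - rewrite cge_big; [lia|]. eapply Forall_impl; [|exact HF]. intros a Ha; simpl in Ha; lia.
    - rewrite cge_step, Sc_step. specialize (IHn (S c)).
      assert (X : cge (S c) Z <= list_sum (map (fun x => x - S c) (firstn k (map (@length _) Z)))).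
      { apply IHn. eapply Forall_impl; [|exact HF]. intros a Ha; simpl in Ha; lia. }
      assert (Y : length (colL c Z) <= length (filter (fun x => Nat.ltb c x) (firstn k (map (@length _) Z)))).
      { rewrite filter_firstn_noninc by auto.
        pose proof (colL_len c Z).
        pose proof (nodup_bound k _ (colL_nodup P R H k c Z Ht HP Hg) (colL_range R k c Z Hg)). lia. }
      lia. }
  set (M := list_max (map (@length _) Z)).
  assert (HF : Forall (fun zr => length zr <= 0 + M) Z).
  { apply Forall_forall; intros zr Hz. simpl. unfold M.
    pose proof (list_max_le (map (@length _) Z) (list_max (map (@length _) Z))) as [X _].
    specialize (X (Nat.le_refl _)). rewrite Forall_forall in X. apply X, in_map; auto. }
  specialize (Main M 0 HF). rewrite cge0, <- cnt_concat_rev in Main.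
  replace (map (fun x => x - 0) (firstn k (map (@length _) Z))) with (firstn k (map (@length _) Z)) in Main; auto.
  rewrite <- map_id at 1. apply map_ext; intros; lia.
Qed.

Lemma fl_in_iff l z x : In x (fl l z) <-> In (x, l) z.
Proof.
  unfold fl; split.
  - intros Hx; apply in_map_iff in Hx as [[y m] [E Hp]]; simpl in E; subst.
    apply filter_In in Hp as [Hp E]; simpl in E. apply Nat.eqb_eq in E; subst; auto.
  - intros H; apply in_map_iff; exists (x, l); split; auto. apply filter_In; split; auto; simpl; apply Nat.eqb_refl.
Qed.

Lemma map_fst_word (f : list Letter -> list (Letter * nat)) T : (forall r, map fst (f r) = r) ->
  map fst (concat (rev (map f T))) = word T.
Proof.
  intros Hf; unfold word. rewrite concat_map, map_rev, map_map.
  f_equal; f_equal. rewrite <- (map_id T) at 2. apply map_ext; auto.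
Qed.

Lemma in_concat_rev {T} (x : T) Z : In x (concat (rev Z)) -> exists r, In r Z /\ In x r.
Proof.
  intros H; apply in_concat in H as [r [Hr Hx]]; exists r; split; auto; apply in_rev; auto.
Qed.

Definition labc (lab : nat) (r : list Letter) := map (fun x => (x, lab)) r.

Fixpoint mkZ (i k : nat) (T : list (list Letter)) : list (list (Letter * nat)) :=
  match T with
  | [] => []
  | r :: T' => labc (if Nat.ltb i k then S i else 0) r :: mkZ (S i) k T'
  end.

Lemma fl_labc l lab r : fl l (labc lab r) = if Nat.eqb lab l then r else [].
Proof.
  induction r as [|x r IH]; simpl; [destruct (lab =? l); auto|].
  unfold labc in *; simpl; rewrite fl_cons, IH; simpl. destruct (lab =? l); auto.
Qed.

Lemma cnt_labc lab r : cnt (labc lab r) = if Nat.eqb lab 0 then 0 else length r.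
Proof.
  induction r as [|x r IH]; simpl; [destruct (lab =? 0); auto|].
  unfold labc in *; simpl; rewrite cnt_cons, IH; simpl. destruct (lab =? 0); auto.
Qed.

Lemma mkZ_props R k T : forall i, Forall (chainR R) T ->
  let z := concat (rev (mkZ i k T)) in
  Forall (fun p => snd p <= k) z /\
  (forall l, l <> 0 -> chainR R (fl l z) /\ (l <= i -> fl l z = [])) /\
  cnt z = list_sum (firstn (k - i) (map (@length _) T)).
Proof.
  induction T as [|r T IH]; intros i HF; simpl.
  - repeat split; auto using chainR_nil. destruct (k - i); auto.
  - inversion HF; subst. destruct (IH (S i) H2) as [F1 [F2 F3]].
    rewrite concat_app; simpl; rewrite app_nil_r. split; [|split].
    + apply Forall_app; split; auto. unfold labc; apply Forall_map, Forall_forall; intros; simpl.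
      destruct (Nat.ltb_spec i k); lia.
    + intros l Hl. rewrite fl_app, fl_labc. destruct (F2 l Hl) as [G1 G2].
      destruct (Nat.eqb_spec (if i <? k then S i else 0) l) as [E|E].
      * destruct (Nat.ltb_spec i k); [|lia]. subst l. rewrite G2 by lia. simpl. split; auto; intros; lia.
      * rewrite app_nil_r. split; auto; intros; apply G2; lia.
    + rewrite cnt_app, F3, cnt_labc. destruct (Nat.ltb_spec i k).
      * simpl. replace (k - i) with (S (k - S i)) by lia. simpl. lia.
      * simpl. replace (k - i) with 0 by lia. replace (k - S i) with 0 by lia. simpl; lia.
Qed.

Lemma lower_rows R k T : Forall (chainR R) T -> ach R (word T) k (list_sum (firstn k (map (@length _) T))).
Proof.
  intros HF. destruct (mkZ_props R k T 0 HF) as [F1 [F2 F3]].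
  exists (concat (rev (mkZ 0 k T))). split; [|split; [split|]].
  - assert (forall i, map (map fst) (mkZ i k T) = T).
    { clear. induction T as [|r T IH]; intros i; simpl; auto. rewrite IH. unfold labc; rewrite map_map; simpl; rewrite map_id; auto. }
    unfold word; rewrite concat_map, map_rev, H; auto.
  - auto.
  - intros l Hl; apply F2; auto.
  - rewrite F3, Nat.sub_0_r; auto.
Qed.

Fixpoint labr (j k : nat) (r : list Letter) : list (Letter * nat) :=
  match r with
  | [] => []
  | x :: r' => (x, if Nat.ltb j k then S j else 0) :: labr (S j) k r'
  end.

Lemma labr_fst j k r : map fst (labr j k r) = r.
Proof. revert j; induction r; intros j; simpl; f_equal; auto. Qed.

Lemma labr_in j k r x l : In (x, l) (labr j k r) -> l <> 0 -> l <= k /\ exists i, l = S (j + i) /\ i < length r /\ x = nth i r d0.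
Proof.
  revert j; induction r as [|y r IH]; intros j Hin Hl; simpl in *; [destruct Hin|].
  destruct Hin as [E|Hin].
  - inversion E; subst. destruct (Nat.ltb_spec j k); [|lia]. split; [lia|]. exists 0. repeat split; auto; lia.
  - destruct (IH (S j) Hin Hl) as [Hk [i [E1 [E2 E3]]]]. split; auto. exists (S i); repeat split; auto; lia.
Qed.

Lemma labr_fl_len j k r l : l <> 0 -> length (fl l (labr j k r)) <= 1.
Proof.
  intros Hl.
  assert (G : forall j', j < j' -> l = S j -> fl l (labr j' k r) = []).
  { clear. revert j; induction r as [|y r IH]; intros j j' Hj E; simpl; auto.
    rewrite fl_cons; cbn [fst snd]. destruct (Nat.ltb_spec j' k);
    destruct (Nat.eqb_spec (S j') l); try lia; destruct (Nat.eqb_spec 0 l); try lia; apply (IH j); lia. }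
  clear G.
  assert (G : forall r j j', j < j' -> l = S j -> fl l (labr j' k r) = []).
  { clear. induction r as [|y r IH]; intros j j' Hj E; simpl; auto.
    rewrite fl_cons; cbn [fst snd]. destruct (Nat.ltb_spec j' k);
    destruct (Nat.eqb_spec (S j') l); try lia; destruct (Nat.eqb_spec 0 l); try lia; apply (IH j); lia. }
  revert j; induction r as [|y r IH]; intros j; simpl; auto.
  rewrite fl_cons; cbn [fst snd]. destruct (Nat.eqb_spec (if j <? k then S j else 0) l) as [E|E].
  - destruct (Nat.ltb_spec j k); [|lia]. rewrite (G r j) by lia. simpl; lia.
  - apply IH.
Qed.

Lemma cnt_labr j k r : cnt (labr j k r) = Nat.min (k - j) (length r).
Proof.
  revert j; induction r as [|y r IH]; intros j; simpl; [unfold cnt; simpl; lia|].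
  rewrite cnt_cons, IH; cbn [fst snd]. destruct (Nat.ltb_spec j k); simpl; lia.
Qed.

Lemma chainR_short R l : length l <= 1 -> chainR R l.
Proof. intros H; destruct l as [|x [|y l]]; simpl in H; auto using chainR_nil, chainR_one; lia. Qed.

Lemma lower_cols P R (H : axR P R) k T : tabc (negR R) T -> Forall P (concat T) ->
  ach R (word T) k (list_sum (map (fun r => Nat.min k (length r)) T)).
Proof.
  intros Ht HP. exists (concat (rev (map (labr 0 k) T))). split; [|split; [split|]].
  - apply map_fst_word; intros; apply labr_fst.
  - apply Forall_forall; intros p Hp. apply in_concat_rev in Hp as [r [Hr Hp]].
    apply in_map_iff in Hr as [r0 [<- _]]. destruct p as [x l].
    destruct (Nat.eq_dec l 0); simpl; [lia|]. apply labr_in in Hp as [Hk _]; auto.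
  - intros l Hl. revert Ht HP.
    induction T as [|r T IH]; intros Ht HPT; simpl; [apply chainR_nil|].
    rewrite concat_app; simpl; rewrite app_nil_r, fl_app. apply chainR_app. split; [|split].
    + apply IH; [simpl in Ht; tauto|]. simpl in HPT; apply Forall_app in HPT; tauto.
    + apply chainR_short, labr_fl_len; auto.
    + intros x y Hx Hy. apply fl_in_iff in Hx, Hy.
      apply in_concat_rev in Hx as [zs [Hzs Hx]]. apply in_map_iff in Hzs as [s [<- Hs]].
      destruct (labr_in _ _ _ _ _ Hx Hl) as [_ [i [Ei [Hi Ex]]]].
      destruct (labr_in _ _ _ _ _ Hy Hl) as [_ [i' [Ei' [Hi' Ey]]]].
      assert (i' = i) by lia. subst i' x y.
      assert (Hd : dom (negR R) r s) by (apply (tab_below P (negR R) (axR_neg P R H) T); auto).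
      destruct Hd as [_ Hd]. specialize (Hd i Hi). unfold negR in Hd.
      apply negb_false_iff in Hd; auto.
  - rewrite cnt_concat_rev, map_map. apply Nat.eq_le_incl. f_equal. apply map_ext; intros r.
    rewrite cnt_labr, Nat.sub_0_r; auto.
Qed.

Lemma ach_le R w k m m' : m' <= m -> ach R w k m -> ach R w k m'.
Proof. intros H [z [E [G C]]]; exists z; split; [|split]; auto; lia. Qed.

Lemma greene P R (H : axR P R) w k : Forall P w ->
  list_sum (firstn k (map (@length _) (rsk R w))) =
  list_sum (map (fun r => Nat.min k (length r)) (rsk (negR R) w)).
Proof.
  intros HP.
  set (T := rsk R w). set (T' := rsk (negR R) w).
  assert (HT : tabc R T) by (apply rsk_tab with (P := P); auto).
  assert (HT' : tabc (negR R) T') by (apply rsk_tab with (P := P); auto; apply axR_neg; auto).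
  assert (K1 : knuth R w (word T)) by (apply rsk_knuth with (P := P); auto).
  assert (K2 : knuth R w (word T')) by (apply knuth_neg, rsk_knuth with (P := P); auto; apply axR_neg; auto).
  assert (HPT : Forall P (concat T)) by (eapply Forall_perm; [apply Permutation_sym, rsk_perm|]; auto).
  assert (HPT' : Forall P (concat T')) by (eapply Forall_perm; [apply Permutation_sym, rsk_perm|]; auto).
  assert (UB1 : forall m, ach R w k m -> m <= list_sum (firstn k (map (@length _) T))).
  { intros m Ha. apply (ach_knuth P R H w (word T) k m K1 HP) in Ha as [z [Ez [Hg Hc]]].
    apply split_word in Ez as [Z [EZ ->]].
    pose proof (bound_cols P R H k Z) as X. rewrite EZ in X.
    specialize (X HT HPT Hg).
    replace (map (@length _) Z) with (map (@length _) T) in X; [lia|].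
    rewrite <- EZ, map_map. apply map_ext; intros; rewrite length_map; auto. }
  assert (UB2 : forall m, ach R w k m -> m <= list_sum (map (fun r => Nat.min k (length r)) T')).
  { intros m Ha. apply (ach_knuth P R H w (word T') k m K2 HP) in Ha as [z [Ez [Hg Hc]]].
    apply split_word in Ez as [Z [EZ ->]].
    assert (HF : Forall (fun zr => chainR (negR R) (map fst zr)) Z).
    { apply Forall_forall; intros zr Hz. apply tabc_rows in HT'. rewrite Forall_forall in HT'.
      apply HT'. rewrite <- EZ; apply in_map; auto. }
    pose proof (bound_rows R k Z HF Hg) as X.
    replace (map (fun r => Nat.min k (length r)) T') with (map (fun zr => Nat.min k (length zr)) Z); [lia|].
    rewrite <- EZ, map_map. apply map_ext; intros; rewrite length_map; auto. }
  assert (LB1 : ach R w k (list_sum (firstn k (map (@length _) T)))).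
  { apply (ach_knuth P R H w (word T) k _ K1 HP). apply lower_rows. apply tabc_rows; auto. }
  assert (LB2 : ach R w k (list_sum (map (fun r => Nat.min k (length r)) T'))).
  { apply (ach_knuth P R H w (word T') k _ K2 HP). apply lower_cols with (P := P); auto. }
  specialize (UB1 _ LB2). specialize (UB2 _ LB1). lia.
Qed.

Lemma firstn_seq k s M : firstn k (seq s M) = seq s (Nat.min k M).
Proof.
  revert k s; induction M as [|M IH]; intros k s; simpl.
  - rewrite firstn_nil; destruct k; auto.
  - destruct k; simpl; auto. rewrite IH; auto.
Qed.

Lemma count_lt_seq n x : length (filter (fun j => Nat.ltb j x) (seq 0 n)) = Nat.min n x.
Proof.
  induction n as [|n IH]; [simpl; auto|].
  rewrite seq_S, filter_app, length_app, IH. cbn [filter Nat.add]. destruct (Nat.ltb_spec n x); cbn [length]; lia.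
Qed.

Lemma sum_map_add {T} (f g : T -> nat) l : list_sum (map (fun j => f j + g j) l) = list_sum (map f l) + list_sum (map g l).
Proof. induction l; simpl; auto; lia. Qed.

Lemma sum_count_ind n x : list_sum (map (fun j => if Nat.ltb j x then 1 else 0) (seq 0 n)) = Nat.min n x.
Proof.
  rewrite <- count_lt_seq. generalize (seq 0 n). induction l as [|j l IH]; simpl; auto.
  destruct (Nat.ltb j x); simpl; lia.
Qed.

Lemma F_eq n mu : list_sum (map (fun j => length (filter (fun y => Nat.ltb j y) mu)) (seq 0 n)) =
  list_sum (map (fun y => Nat.min n y) mu).
Proof.
  induction mu as [|x mu IH]; simpl.
  - generalize (seq 0 n); induction l; simpl; auto.
  - rewrite <- IH, <- sum_count_ind. rewrite <- sum_map_add. f_equal. apply map_ext; intros j.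
    destruct (Nat.ltb j x); simpl; lia.
Qed.

Lemma transpose_sums k mu : list_sum (firstn k (transpose mu)) = list_sum (map (fun y => Nat.min k y) mu).
Proof.
  unfold transpose. rewrite firstn_map, firstn_seq, F_eq. f_equal. apply map_ext_in; intros y Hy.
  assert (y <= list_max mu).
  { pose proof (list_max_le mu (list_max mu)) as [X _]. specialize (X (Nat.le_refl _)).
    rewrite Forall_forall in X; auto. }
  lia.
Qed.

Lemma list_max_gt j mu : j < list_max mu -> exists y, In y mu /\ j < y.
Proof.
  induction mu as [|x mu IH]; simpl; intros H; [lia|].
  destruct (Nat.le_gt_cases (list_max mu) x).
  - exists x; split; auto; lia.
  - destruct IH as [y [Hy Hj]]; [lia|]. exists y; auto.
Qed.

Lemma transpose_pos mu : forall x, In x (transpose mu) -> 0 < x.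
Proof.
  unfold transpose; intros x Hx. apply in_map_iff in Hx as [j [<- Hj]]. apply in_seq in Hj.
  destruct (list_max_gt j mu) as [y [Hy Hjy]]; [lia|].
  destruct (filter (fun k => Nat.ltb j k) mu) eqn:E; simpl; [|lia].
  assert (In y (filter (fun k => Nat.ltb j k) mu)) by (apply filter_In; split; auto; apply Nat.ltb_lt; auto).
  rewrite E in H; destruct H.
Qed.

Lemma eq_by_sums l1 : forall l2, (forall x, In x l1 -> 0 < x) -> (forall x, In x l2 -> 0 < x) ->
  (forall k, list_sum (firstn k l1) = list_sum (firstn k l2)) -> l1 = l2.
Proof.
  induction l1 as [|x l1 IH]; intros [|y l2] H1 H2 HS; auto.
  - specialize (HS 1); simpl in HS. specialize (H2 y (or_introl eq_refl)); lia.
  - specialize (HS 1); simpl in HS. specialize (H1 x (or_introl eq_refl)); lia.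
  - assert (x = y) by (specialize (HS 1); simpl in HS; lia). subst y. f_equal.
    apply IH; auto. intros; apply H1; simpl; auto. intros; apply H2; simpl; auto.
    intros k; specialize (HS (S k)); simpl in HS; lia.
Qed.

Lemma tabc_pos R T : tabc R T -> forall x, In x (map (@length _) T) -> 0 < x.
Proof.
  induction T as [|r T IH]; simpl; intros Ht x Hx; [destruct Hx|].
  destruct Ht as [_ [Hne [_ Ht]]]. destruct Hx as [<-|Hx]; auto.
  destruct r; simpl; [congruence|lia].
Qed.

Lemma main_generic P R (H : axR P R) w : Forall P w ->
  map (@length _) (rsk R w) = transpose (map (@length _) (rsk (negR R) w)).
Proof.
  intros HP. apply eq_by_sums.
  - apply tabc_pos with (R := R), rsk_tab with (P := P); auto.
  - apply transpose_pos.
  - intros k. rewrite transpose_sums, map_map. apply greene with (P := P); auto.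
Qed.

Definition Rof (le : Letter -> Letter -> bool) (s : Letter -> bool) (a b : Letter) : bool :=
  negb (if s b then ltb le b a else le b a).

Lemma row_insert_rins le s x r : row_insert le s x r = rins (Rof le s) x r.
Proof.
  induction r as [|e r IH]; simpl; auto. unfold Rof. rewrite IH.
  destruct (if s x then ltb le x e else le x e); simpl; auto.
Qed.

Lemma tab_insert_tins le s x T : tab_insert le s x T = tins (Rof le s) x T.
Proof.
  revert x; induction T as [|r T IH]; intros x; simpl; auto.
  rewrite row_insert_rins. destruct (rins (Rof le s) x r) as [[y|] r']; auto. rewrite IH; auto.
Qed.

Lemma RSK_rsk le s w : RSK le s w = rsk (Rof le s) w.
Proof.
  unfold RSK, rsk. generalize (@nil (list Letter)) as T0.
  induction w as [|x w IH]; intros T0; simpl; auto. rewrite tab_insert_tins; auto.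
Qed.

Definition lin (P : Letter -> Prop) (le : Letter -> Letter -> bool) : Prop :=
  (forall a, P a -> le a a = true) /\
  (forall a b, P a -> P b -> le a b = true -> le b a = true -> a = b) /\
  (forall a b c, P a -> P b -> P c -> le a b = true -> le b c = true -> le a c = true) /\
  (forall a b, P a -> P b -> le a b = true \/ le b a = true).

Lemma adm_lin I le : admissible I le -> lin (inA I) le.
Proof. intros [H1 [H2 [H3 [H4 _]]]]; repeat split; auto. Qed.

Lemma lin_rev P le : lin P le -> lin P (rev_order le).
Proof.
  unfold rev_order; intros [H1 [H2 [H3 H4]]]; split; [|split; [|split]].
  - intros a Pa; apply H1; auto.
  - intros a b Pa Pb E1 E2; apply H2; auto.
  - intros a b c Pa Pb Pc E1 E2; apply (H3 c b a); auto.
  - intros a b Pa Pb; destruct (H4 a b); auto.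
Qed.

Lemma Rof_char P le s (H : lin P le) a b : P a -> P b ->
  (Rof le s a b = true <-> (a = b /\ s b = true) \/ (a <> b /\ le a b = true)).
Proof.
  destruct H as [H1 [H2 [H3 H4]]]. intros Pa Pb. unfold Rof, ltb.
  destruct (classic (a = b)) as [->|Hab].
  - rewrite H1 by auto. destruct (s b); simpl; intuition; discriminate.
  - destruct (le a b) eqn:E1; destruct (le b a) eqn:E2; destruct (s b); simpl;
      try (specialize (H2 a b Pa Pb E1 E2); contradiction);
      try (destruct (H4 a b Pa Pb); congruence); intuition; discriminate.
Qed.

Lemma Rof_axR P le s : lin P le -> axR P (Rof le s).
Proof.
  intros Hl. pose proof Hl as [H1 [H2 [H3 H4]]]. split.
  - intros a b c Pa Pb Pc E1 E2.
    apply (Rof_char P le s Hl) in E1, E2; auto. apply (Rof_char P le s Hl); auto.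
    destruct E1 as [[<- Hs]|[Hab Eab]]; auto.
    destruct E2 as [[<- Hs]|[Hbc Ebc]]; auto.
    right; split; [|eapply H3; eauto]. intros <-. apply Hab; apply H2; auto.
  - intros a b c Pa Pb Pc E1.
    pose proof E1 as E1'. apply (Rof_char P le s Hl) in E1; auto.
    destruct (classic (c = a)) as [->|Hca]; [right; auto|].
    destruct (classic (c = b)) as [->|Hcb]; [left; auto|].
    rewrite !(Rof_char P le s Hl) by auto.
    destruct E1 as [[<- Hs]|[Hab Eab]].
    + destruct (H4 a c Pa Pc) as [X|X]; [left|right]; right; split; auto.
    + destruct (le a c) eqn:Eac; [left; right; split; auto|].
      destruct (H4 a c Pa Pc) as [X|X]; [congruence|]. right; right; split; auto. eapply H3; eauto.
Qed.

Lemma compl P le (H : lin P le) a b : P a -> P b -> (a <> b \/ isG a = false) ->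
  Rof (rev_order le) isLo a b = negR (Rof le isLe) a b.
Proof.
  intros Pa Pb Hq. unfold negR.
  destruct (Rof le isLe a b) eqn:E1; destruct (Rof (rev_order le) isLo a b) eqn:E2; simpl; auto.
  - apply (Rof_char P le isLe H) in E1; auto. apply (Rof_char P (rev_order le) isLo (lin_rev _ _ H)) in E2; auto.
    unfold rev_order in E2. destruct H as [H1 [H2 _]].
    destruct E1 as [[Eab X]|[X Y]]; destruct E2 as [[Z W]|[Z W]]; try congruence.
    + subst; destruct b; simpl in *; discriminate.
    + exfalso; apply X, H2; auto.
  - assert (E1' : Rof le isLe a b <> true) by congruence.
    assert (E2' : Rof (rev_order le) isLo a b <> true) by congruence.
    rewrite (Rof_char P le isLe H) in E1' by auto.
    rewrite (Rof_char P (rev_order le) isLo (lin_rev _ _ H)) in E2' by auto.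
    unfold rev_order in E2'. destruct H as [H1 [H2 [H3 H4]]].
    destruct (classic (a = b)) as [<-|Hab].
    + destruct Hq as [Hq|Hq]; [congruence|]. destruct a; simpl in *; intuition.
    + destruct (H4 a b Pa Pb); intuition.
Qed.

Lemma perm_filter {T} (f : T -> bool) l l' : Permutation l l' -> Permutation (filter f l) (filter f l').
Proof.
  induction 1; simpl; auto.
  - destruct (f x); auto.
  - destruct (f x); destruct (f y); auto. constructor.
  - eapply Permutation_trans; eauto.
Qed.

Lemma nodupG_sub l1 l2 : NoDup (filter isG (l1 ++ l2)) -> NoDup (filter isG l2).
Proof. rewrite filter_app; apply NoDup_app_remove_l. Qed.

Lemma nodupG_perm l1 l2 : Permutation l1 l2 -> NoDup (filter isG l1) -> NoDup (filter isG l2).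
Proof. intros Hp; apply Permutation_NoDup, perm_filter; auto. Qed.

Lemma nodupG_pair x l e : NoDup (filter isG (x :: l)) -> In e l -> e <> x \/ isG e = false.
Proof.
  intros Hn He. destruct (isG e) eqn:Ge; auto. left; intros ->.
  simpl in Hn; rewrite Ge in Hn. inversion Hn; subst. apply H1, filter_In; auto.
Qed.

Lemma rins_agree R1 R2 x r : (forall e, In e r -> R1 e x = R2 e x) -> rins R1 x r = rins R2 x r.
Proof.
  induction r as [|e r IH]; intros Ha; simpl; auto.
  rewrite Ha by (simpl; auto). rewrite IH; auto. intros; apply Ha; simpl; auto.
Qed.

Lemma tins_agree (P : Letter -> Prop) R1 R2
  (HA : forall a b, P a -> P b -> (a <> b \/ isG a = false) -> R1 a b = R2 a b) x T :
  Forall P (x :: concat T) -> NoDup (filter isG (x :: concat T)) -> tins R1 x T = tins R2 x T.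
Proof.
  revert x; induction T as [|r T IH]; intros x HP Hn; simpl; auto.
  rewrite Forall_forall in HP.
  assert (Hr : rins R1 x r = rins R2 x r).
  { apply rins_agree. intros e He. apply HA; try (apply HP; simpl; rewrite in_app_iff; auto).
    apply (nodupG_pair x (r ++ concat T)); auto. apply in_or_app; auto. }
  rewrite Hr. destruct (rins R2 x r) as [[y|] r'] eqn:E; auto.
  apply rins_some in E as [a [b [-> _]]]. f_equal. apply IH.
  - apply Forall_forall; intros e [<-|He]; apply HP; simpl; rewrite !in_app_iff; simpl; auto.
  - apply nodupG_sub with (l1 := x :: a). apply nodupG_sub with (l1 := b).
    eapply nodupG_perm; [|exact Hn]. cbn [concat].
    replace (x :: (a ++ y :: b) ++ concat T) with (((x :: a ++ [y]) ++ b) ++ concat T)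
      by (simpl; rewrite <- !app_assoc; simpl; auto).
    replace (b ++ (x :: a) ++ y :: concat T) with ((b ++ (x :: a ++ [y])) ++ concat T)
      by (rewrite <- app_assoc; simpl; rewrite <- app_assoc; simpl; reflexivity).
    apply Permutation_app_tail, Permutation_app_comm.
Qed.

Lemma rsk_agree (P : Letter -> Prop) R1 R2
  (HA : forall a b, P a -> P b -> (a <> b \/ isG a = false) -> R1 a b = R2 a b) w :
  Forall P w -> NoDup (filter isG w) -> rsk R1 w = rsk R2 w.
Proof.
  induction w as [|x w IH] using rev_ind; intros HP Hn; auto.
  rewrite !rsk_app. apply Forall_app in HP as [HP1 HP2].
  assert (Hn1 : NoDup (filter isG w)) by (rewrite filter_app in Hn; eapply NoDup_app_remove_r; eauto).
  rewrite IH by auto. apply tins_agree with (P := P); auto.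
  - eapply Forall_perm; [|apply Forall_app; split; [exact HP1|exact HP2]].
    eapply Permutation_trans; [apply Permutation_sym, Permutation_cons_append|]. constructor.
    apply Permutation_sym, rsk_perm.
  - eapply nodupG_perm; [|exact Hn].
    eapply Permutation_trans; [apply Permutation_sym, Permutation_cons_append|]. constructor.
    apply Permutation_sym, rsk_perm.
Qed.

Lemma G_letters_filter w : G_letters w = map (fun a => match a with Gr x => x | _ => 0%R end) (filter isG w).
Proof. induction w as [|[i|j|x] w IH]; simpl; auto. rewrite IH; auto. Qed.

Theorem lemma3 (I : R -> Prop) (HI : is_interval I)
    (le : Letter -> Letter -> bool) (Hadm : admissible I le)
    (n : nat) (w : list Letter) (Hlen : length w = n)
    (HwA : Forall (inA I) w) (Hdist : NoDup (G_letters w)) :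
  phi le isLe w = transpose (phi (rev_order le) isLo w).
Proof.
  pose proof (adm_lin I le Hadm) as Hl.
  assert (Hn : NoDup (filter isG w)).
  { rewrite G_letters_filter in Hdist. eapply NoDup_map_inv; eauto. }
  unfold phi, shape. rewrite !RSK_rsk.
  rewrite (rsk_agree (inA I) (Rof (rev_order le) isLo) (negR (Rof le isLe))); auto.
  - apply main_generic with (P := inA I); auto. apply Rof_axR; auto.
  - intros a b Pa Pb Hq. apply compl with (P := inA I); auto.
Qed.
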